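(* Let $(z,y)\in D'\times D$ satisfy the paraxial approximation, i.e. for $0<\eta\ll 1$, \[ y=\left( \eta^{\frac{1}{2}} y^\perp,y^\parallel \right)\in D, \qquad z=\left(\eta^{\frac{1}{2}} z^\perp,z^\parallel \right)\in D'. \] In the paraxial regime in dimension $3$ the point spread function has the expression \begin{multline*} F^{c}(z,y) = \eta^{-1} \left(\frac{c}{c^\star}\right)^2 \frac{\ell_0^4}{\left(16\pi^2|z||\varphi_c(y)| \right)^2} \int_{\mathcal{B}_0}\omega^2 e^{i\frac{2\omega}{\eta c}\left( |z| - |\varphi_c(y)| \right)} e^{i\frac{\omega}{c}\left(1-\left(\frac{c^\star}{c}\right)^2\right) \frac{\vert \varphi_c(y)^\perp\vert^2}{\vert \varphi_c(y)\vert}} \\ \mathcal{G}^2\left(\frac{\omega\ell_0}{c}\left( \frac{z^\perp}{|z|}- \frac{\varphi_c(y)^\perp}{|\varphi_c(y)|}\right) , \frac{\omega\ell_0^2}{c}\left( \frac{1}{|z|} - \left(\frac{c}{c^\star}\right)^2\frac{1}{|\varphi_c(y)|}\right)\right)\mathrm{d} \omega+ \mathcal{O}(1), \end{multline*} or equivalently \begin{multline*} F^{c}(z,y) = \eta^{-1} \left(\frac{c^\star}{c}\right)^2 \frac{\ell_0^4}{\left(16\pi^2|y||\varphi_c^{-1}(z)| \right)^2} \int_{\mathcal{B}_0}\omega^2 e^{i\frac{2\omega}{\eta c^\star}\left( |\varphi_c^{-1}(z)| - |y| \right)} e^{i\frac{\omega}{c^\star}\left(\left(\frac{c}{c^\star}\right)^2-1\right)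 \frac{\vert \varphi_c^{-1}(z)^\perp\vert^2}{\vert \varphi^{-1}_c(z)\vert}} \\ \mathcal{G}^2\left(\frac{\omega\ell_0}{c^\star}\left( \frac{\varphi_c^{-1}(z)^\perp}{|\varphi_c^{-1}(z)|}- \frac{y^\perp}{|y|}\right) , \frac{\omega\ell_0^2}{c^\star}\left( \left(\frac{c^\star}{c}\right)^2 \frac{1}{|\varphi_c^{-1}(z)|} - \frac{1}{|y|}\right)\right)\mathrm{d} \omega + \mathcal{O}(1), \end{multline*} where \[ \mathcal{G}(\xi_1,\xi_2) := \int_{[-1,1]^2} e^{-i x_e^\perp \cdot \xi_1 + i \frac{\left\vert x_e^\perp\right\vert^2}{2} \xi_2} \,\mathrm{d} x_e^\perp, \qquad \xi_1 \in \mathbb{R}^2,\ \xi_2\in \mathbb{R}, \] and \[ \varphi_c: D \to D',\qquad \varphi_c(y):= \left(\eta^\frac{1}{2} \left( \frac{c}{c^\star}\right)^2y^\perp, \frac{c}{c^\star} y^\parallel\right). \]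
   Context: Setting: a medium $D\subset\mathbb{R}^d$ (here $d=3$) with random micro-structured index $n_\varepsilon(x)=n(x/\varepsilon)$ whose homogenized (effective) index equals the background index $n^\star$; effective speed of sound $c^\star=1/\sqrt{n^\star}$, and the homogenized Green function is $G^\star=\Gamma^{\omega/c^\star}$, where $\Gamma^k$ is the outgoing free-space Helmholtz Green function with wavenumber $k$. A linear probe $\mathcal{P}=[-\ell,\ell]^{d-1}\times\{0\}$ records the measurements $M(x_e,x_r,\omega)=\omega^2\int_D (n_\varepsilon(y)-n^\star)G^\star(x_r,y)G^\star(x_e,y)\,\mathrm{d}y$ for $\omega$ in the band $\mathcal{B}$. The imaging function with backpropagation speed $c$ is $I^c(z)=\int_{\mathcal{P}\times\mathcal{P}\times\mathcal{B}}\overline{M(x_e,x_r,\omega)}\Gamma^{\omega/c}(z,x_e)\Gamma^{\omega/c}(z,x_r)\,\mathrm{d}x_e\mathrm{d}x_r\mathrm{d}\omega$ for $z$ in the virtual image domain $D'$; it equals $\int_D(n_\varepsilon(y)-n^\star)F^c(z,y)\,\mathrm{d}y$ with point spread function $F^c(z,y)=\int_{\mathcal{B}}\omega^2\left(\int_{\mathcal{P}}\Gamma^{\omega/c}(z,x_r)\overline{G^\star(y,x_r)}\,\mathrm{d}x_r\right)^2\mathrm{d}\omega$. Paraxial scaling with small parameter $\eta$: central frequency $\omega_c=\omega_0/\eta$, bandwidth $\mathcal{B}=\mathcal{B}_0/\eta$ (frequencies rescaled to the band $\mathcal{B}_0$), probe half-length $\ell=\eta^{1/2}\ell_0$, $\mathcal{P}=\eta^{1/2}\mathcal{P}_0$,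 $\varepsilon=\eta^\alpha$, $\alpha>0$. For a point $y$, $y^\perp\in\mathbb{R}^{d-1}$ denotes the transverse coordinate rescaled by $\eta^{-1/2}$ and $y^\parallel\ge 0$ denotes the axial (depth) coordinate. *)

(* Defs.v *)
From Stdlib Require Import Reals.
From Coquelicot Require Import Coquelicot.
Open Scope R_scope.

(* points of R^3 are triples (x1, x2, x3); x3 is the axial (depth) coordinate,
   the probe lies in the plane x3 = 0 *)
Definition pt := (R * R * R)%type.
Definition mkpt (a b c : R) : pt := (a, b, c).
Definition norm3 (x : pt) : R :=
  let '(a, b, c) := x in sqrt (a ^ 2 + b ^ 2 + c ^ 2).
Definition dist3 (x y : pt) : R :=
  let '(a, b, c) := x in let '(a', b', c') := y in
  sqrt ((a - a') ^ 2 + (b - b') ^ 2 + (c - c') ^ 2).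

Definition cexpi (t : R) : C := (cos t, sin t).

Definition Gamma (k : R) (x y : pt) : C :=
  Cmult (cexpi (k * dist3 x y)) (RtoC (/ (4 * PI * dist3 x y))).

Definition CInt (f : R -> C) (a b : R) : C := RInt (V := C_R_CompleteNormedModule) f a b.

(* point spread function F^c(z,y), with effective speed cs = c^star, probe
   P = [-l,l]^2 x {0}, frequency band B = [wa, wb] *)
Definition psf (c cs l wa wb : R) (z y : pt) : C :=
  CInt (fun w =>
    let I := CInt (fun x1 => CInt (fun x2 =>
               Cmult (Gamma (w / c) z (mkpt x1 x2 0))
                     (Cconj (Gamma (w / cs) y (mkpt x1 x2 0)))) (- l) l) (- l) l in
    Cmult (RtoC (w ^ 2)) (Cmult I I)) wa wb.

Definition calG (xi11 xi12 xi2 : R) : C :=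
  CInt (fun u1 => CInt (fun u2 =>
    cexpi (- (u1 * xi11 + u2 * xi12) + (u1 ^ 2 + u2 ^ 2) / 2 * xi2)) (-1) 1) (-1) 1.

Definition parax (eta p1 p2 q : R) : pt := mkpt (sqrt eta * p1) (sqrt eta * p2) q.

Definition phi_c (eta c cs yp1 yp2 ypar : R) : pt :=
  parax eta ((c / cs) ^ 2 * yp1) ((c / cs) ^ 2 * yp2) ((c / cs) * ypar).
Definition phi_c_inv (eta c cs zp1 zp2 zpar : R) : pt :=
  parax eta ((cs / c) ^ 2 * zp1) ((cs / c) ^ 2 * zp2) ((cs / c) * zpar).

(* first leading term; (zp, zpar), (yp, ypar) are the rescaled coordinates,
   band B0 = [a, b], probe half-length l0 (rescaled) *)
Definition lead1 (eta c cs l0 a b zp1 zp2 zpar yp1 yp2 ypar : R) : C :=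
  let z := parax eta zp1 zp2 zpar in
  let ph := phi_c eta c cs yp1 yp2 ypar in
  let nz := norm3 z in let nph := norm3 ph in
  let ph1 := (c / cs) ^ 2 * yp1 in let ph2 := (c / cs) ^ 2 * yp2 in
  Cmult (RtoC (/ eta * (c / cs) ^ 2 * l0 ^ 4 / (16 * PI ^ 2 * nz * nph) ^ 2))
   (CInt (fun w =>
     let g := calG (w * l0 / c * (zp1 / nz - ph1 / nph))
                   (w * l0 / c * (zp2 / nz - ph2 / nph))
                   (w * l0 ^ 2 / c * (/ nz - (c / cs) ^ 2 * / nph)) in
     Cmult (RtoC (w ^ 2))
      (Cmult (cexpi (2 * w / (eta * c) * (nz - nph)))
       (Cmult (cexpi (w / c * (1 - (cs / c) ^ 2) * (ph1 ^ 2 + ph2 ^ 2) / nph))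
              (Cmult g g)))) a b).

Definition lead2 (eta c cs l0 a b zp1 zp2 zpar yp1 yp2 ypar : R) : C :=
  let y := parax eta yp1 yp2 ypar in
  let ps := phi_c_inv eta c cs zp1 zp2 zpar in
  let ny := norm3 y in let nps := norm3 ps in
  let ps1 := (cs / c) ^ 2 * zp1 in let ps2 := (cs / c) ^ 2 * zp2 in
  Cmult (RtoC (/ eta * (cs / c) ^ 2 * l0 ^ 4 / (16 * PI ^ 2 * ny * nps) ^ 2))
   (CInt (fun w =>
     let g := calG (w * l0 / cs * (ps1 / nps - yp1 / ny))
                   (w * l0 / cs * (ps2 / nps - yp2 / ny))
                   (w * l0 ^ 2 / cs * ((cs / c) ^ 2 * / nps - / ny)) in
     Cmult (RtoC (w ^ 2))
      (Cmult (cexpi (2 * w / (eta * cs) * (nps - ny)))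
       (Cmult (cexpi (w / cs * ((c / cs) ^ 2 - 1) * (ps1 ^ 2 + ps2 ^ 2) / nps))
              (Cmult g g)))) a b).

(* Main.v *)
Require Import Defs.
From Stdlib Require Import Reals Lra Psatz.
From Coquelicot Require Import Coquelicot.
From Stdlib Require Import ClassicalEpsilon.
Open Scope R_scope.


Lemma cpair {T : UniformSpace} {U V : UniformSpace} (f : T -> U) (g : T -> V) (p : T) :
  continuous f p -> continuous g p -> continuous (fun x => (f x, g x)) p.
Proof.
  intros Hf Hg. unfold continuous.
  apply filterlim_locally. intros eps.
  apply (proj1 (filterlim_locally _ _)) with (eps := eps) in Hf.
  apply (proj1 (filterlim_locally _ _)) with (eps := eps) in Hg.
  generalize (filter_and _ _ Hf Hg). apply filter_imp. intros x [H1 H2]. split; assumption.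
Qed.

Lemma cfst {T : UniformSpace} {U V : UniformSpace} (f : T -> U * V) (p : T) :
  continuous f p -> continuous (fun x => fst (f x)) p.
Proof.
  intros Hf. unfold continuous.
  apply filterlim_locally. intros eps.
  apply (proj1 (filterlim_locally _ _)) with (eps := eps) in Hf.
  revert Hf. apply filter_imp. intros x [H1 H2]. exact H1.
Qed.

Lemma csnd {T : UniformSpace} {U V : UniformSpace} (f : T -> U * V) (p : T) :
  continuous f p -> continuous (fun x => snd (f x)) p.
Proof.
  intros Hf. unfold continuous.
  apply filterlim_locally. intros eps.
  apply (proj1 (filterlim_locally _ _)) with (eps := eps) in Hf.
  revert Hf. apply filter_imp. intros x [H1 H2]. exact H2.
Qed.

Lemma cid {T : UniformSpace} (p : T) : continuous (fun x => x) p.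
Proof. apply continuous_id. Qed.

Lemma cR_const {T : UniformSpace} (c : R) (p : T) : continuous (fun _ => c) p.
Proof. apply continuous_const. Qed.

Lemma cR_plus {T : UniformSpace} (f g : T -> R) p : continuous f p -> continuous g p ->
  continuous (fun x => f x + g x) p.
Proof. intros. apply (continuous_plus (K:=R_AbsRing) (V:=R_NormedModule) f g); auto. Qed.

Lemma cR_opp {T : UniformSpace} (f : T -> R) p : continuous f p -> continuous (fun x => - f x) p.
Proof. intros. apply (continuous_opp (K:=R_AbsRing) (V:=R_NormedModule) f); auto. Qed.

Lemma cR_minus {T : UniformSpace} (f g : T -> R) p : continuous f p -> continuous g p ->
  continuous (fun x => f x - g x) p.
Proof. intros. apply cR_plus; auto. apply cR_opp; auto. Qed.

Lemma cR_mult {T : UniformSpace} (f g : T -> R) p : continuous f p -> continuous g p ->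
  continuous (fun x => f x * g x) p.
Proof. intros. apply (continuous_mult (K:=R_AbsRing) f g); auto. Qed.

Lemma cR_comp {T : UniformSpace} (f : T -> R) (g : R -> R) p : continuous f p -> continuous g (f p) ->
  continuous (fun x => g (f x)) p.
Proof. intros. apply (continuous_comp f g); auto. Qed.

Lemma cR_inv {T : UniformSpace} (f : T -> R) p : continuous f p -> f p <> 0 ->
  continuous (fun x => / f x) p.
Proof.
  intros. apply (cR_comp f Rinv); auto.
  apply (continuous_Rinv_comp (fun x => x)); auto. apply continuous_id.
Qed.

Lemma cR_div {T : UniformSpace} (f g : T -> R) p : continuous f p -> continuous g p -> g p <> 0 ->
  continuous (fun x => f x / g x) p.
Proof. intros. unfold Rdiv. apply cR_mult; auto. apply cR_inv; auto. Qed.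

Lemma cR_sqrt {T : UniformSpace} (f : T -> R) p : continuous f p -> continuous (fun x => sqrt (f x)) p.
Proof. intros. apply (cR_comp f sqrt); auto. apply continuous_sqrt. Qed.

Lemma cR_cos {T : UniformSpace} (f : T -> R) p : continuous f p -> continuous (fun x => cos (f x)) p.
Proof. intros. apply (cR_comp f cos); auto. apply continuous_cos. Qed.

Lemma cR_sin {T : UniformSpace} (f : T -> R) p : continuous f p -> continuous (fun x => sin (f x)) p.
Proof. intros. apply (cR_comp f sin); auto. apply continuous_sin. Qed.

Lemma cR_pow {T : UniformSpace} (f : T -> R) n p : continuous f p -> continuous (fun x => f x ^ n) p.
Proof.
  intros H. induction n as [|n IH].
  - apply continuous_const.
  - apply cR_mult; auto.
Qed.

Lemma cC_pair {T : UniformSpace} (f g : T -> R) (p : T) :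
  continuous f p -> continuous g p ->
  continuous (U := C_R_CompleteNormedModule) (fun x => ((f x, g x) : C)) p.
Proof. intros. apply (cpair (U:=R_UniformSpace) (V:=R_UniformSpace)); auto. Qed.

Lemma cC_fst {T : UniformSpace} (f : T -> C) (p : T) :
  continuous (U := C_R_CompleteNormedModule) f p -> continuous (fun x => fst (f x)) p.
Proof. intros. apply (cfst (U:=R_UniformSpace) (V:=R_UniformSpace)); auto. Qed.

Lemma cC_snd {T : UniformSpace} (f : T -> C) (p : T) :
  continuous (U := C_R_CompleteNormedModule) f p -> continuous (fun x => snd (f x)) p.
Proof. intros. apply (csnd (U:=R_UniformSpace) (V:=R_UniformSpace)); auto. Qed.

Lemma cC_const {T : UniformSpace} (c : C) (p : T) : continuous (U := C_R_CompleteNormedModule) (fun _ => c) p.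
Proof. apply continuous_const. Qed.

Lemma cC_mult {T : UniformSpace} (f g : T -> C) p :
  continuous (U := C_R_CompleteNormedModule) f p ->
  continuous (U := C_R_CompleteNormedModule) g p ->
  continuous (U := C_R_CompleteNormedModule) (fun x => Cmult (f x) (g x)) p.
Proof.
  intros Hf Hg.
  apply (cC_pair (fun x => fst (f x) * fst (g x) - snd (f x) * snd (g x))
                 (fun x => fst (f x) * snd (g x) + snd (f x) * fst (g x))).
  - apply cR_minus; apply cR_mult; first [apply cC_fst | apply cC_snd]; auto.
  - apply cR_plus; apply cR_mult; first [apply cC_fst | apply cC_snd]; auto.
Qed.

Lemma cC_minus {T : UniformSpace} (f g : T -> C) p :
  continuous (U := C_R_CompleteNormedModule) f p ->
  continuous (U := C_R_CompleteNormedModule) g p ->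
  continuous (U := C_R_CompleteNormedModule) (fun x => Cminus (f x) (g x)) p.
Proof.
  intros Hf Hg.
  apply (cC_pair (fun x => fst (f x) + - fst (g x))
                 (fun x => snd (f x) + - snd (g x))).
  - apply cR_plus; [|apply cR_opp]; first [apply cC_fst | apply cC_snd]; auto.
  - apply cR_plus; [|apply cR_opp]; first [apply cC_fst | apply cC_snd]; auto.
Qed.

Lemma cC_conj {T : UniformSpace} (f : T -> C) p :
  continuous (U := C_R_CompleteNormedModule) f p ->
  continuous (U := C_R_CompleteNormedModule) (fun x => Cconj (f x)) p.
Proof.
  intros Hf.
  apply (cC_pair (fun x => fst (f x)) (fun x => - snd (f x))).
  - apply cC_fst; auto.
  - apply cR_opp; apply cC_snd; auto.
Qed.

Lemma cC_RtoC {T : UniformSpace} (f : T -> R) p : continuous f p ->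
  continuous (U := C_R_CompleteNormedModule) (fun x => RtoC (f x)) p.
Proof. intros. apply (cC_pair f (fun _ => 0)); auto. apply cR_const. Qed.

Lemma cC_cexpi {T : UniformSpace} (f : T -> R) p : continuous f p ->
  continuous (U := C_R_CompleteNormedModule) (fun x => cexpi (f x)) p.
Proof. intros. apply (cC_pair (fun x => cos (f x)) (fun x => sin (f x))).
  apply cR_cos; auto. apply cR_sin; auto. Qed.

Lemma cC_scal {T : UniformSpace} (f : T -> R) (g : T -> C) p : continuous f p ->
  continuous (U := C_R_CompleteNormedModule) g p ->
  continuous (U := C_R_CompleteNormedModule) (fun x => scal (f x) (g x)) p.
Proof.
  intros Hf Hg.
  apply (cC_pair (fun x => f x * fst (g x)) (fun x => f x * snd (g x))).
  - apply cR_mult; auto. apply cC_fst; auto.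
  - apply cR_mult; auto. apply cC_snd; auto.
Qed.


Ltac cont_step :=
  match goal with
  | |- continuous (fun _ => ?c) _ => apply continuous_const
  | |- continuous (fun x => x) _ => apply continuous_id
  | |- continuous (fun x => Cmult (@?f x) (@?g x)) _ => apply (cC_mult f g)
  | |- continuous (fun x => Cminus (@?f x) (@?g x)) _ => apply (cC_minus f g)
  | |- continuous (fun x => Cconj (@?f x)) _ => apply (cC_conj f)
  | |- continuous (fun x => RtoC (@?f x)) _ => apply (cC_RtoC f)
  | |- continuous (fun x => cexpi (@?f x)) _ => apply (cC_cexpi f)
  | |- continuous (fun x => Rplus (@?f x) (@?g x)) _ => apply (cR_plus f g)
  | |- continuous (fun x => Rminus (@?f x) (@?g x)) _ => apply (cR_minus f g)
  | |- continuous (fun x => Rmult (@?f x) (@?g x)) _ => apply (cR_mult f g)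
  | |- continuous (fun x => Rdiv (@?f x) (@?g x)) _ => apply (cR_div f g)
  | |- continuous (fun x => Ropp (@?f x)) _ => apply (cR_opp f)
  | |- continuous (fun x => Rinv (@?f x)) _ => apply (cR_inv f)
  | |- continuous (fun x => sqrt (@?f x)) _ => apply (cR_sqrt f)
  | |- continuous (fun x => cos (@?f x)) _ => apply (cR_cos f)
  | |- continuous (fun x => sin (@?f x)) _ => apply (cR_sin f)
  | |- continuous (fun x => pow (@?f x) _) _ => apply (cR_pow f)
  | |- continuous (fun x => fst (@?f x)) _ => apply (cfst f)
  | |- continuous (fun x => snd (@?f x)) _ => apply (csnd f)
  end.


Lemma cont_sec {T : UniformSpace} (f : T -> R -> C) (q : T) (x : R) :
  (forall z : T * R, continuous (U := C_R_CompleteNormedModule) (fun z => f (fst z) (snd z)) z) ->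
  continuous (U := C_R_CompleteNormedModule) (f q) x.
Proof.
  intros H.
  apply (continuous_comp (fun x => (q, x)) (fun z => f (fst z) (snd z))).
  - apply cpair. apply continuous_const. apply continuous_id.
  - apply H.
Qed.

Lemma ex_sec {T : UniformSpace} (f : T -> R -> C) (q : T) c d :
  (forall z : T * R, continuous (U := C_R_CompleteNormedModule) (fun z => f (fst z) (snd z)) z) ->
  ex_RInt (V := C_R_CompleteNormedModule) (f q) c d.
Proof.
  intros H. apply ex_RInt_continuous. intros. apply cont_sec; auto.
Qed.

Lemma param_cont {T : UniformSpace} (f : T -> R -> C) (c d : R) (p : T) :
  c <= d ->
  (forall z : T * R, continuous (U := C_R_CompleteNormedModule) (fun z => f (fst z) (snd z)) z) ->
  continuous (U := C_R_CompleteNormedModule) (fun q => CInt (f q) c d) p.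
Proof.
  intros Hcd Hc.
  assert (Hex : forall q, ex_RInt (V := C_R_CompleteNormedModule) (f q) c d)
    by (intros; apply ex_sec; auto).
  unfold continuous. apply filterlim_locally. intros eps.
  set (M := eps / (2 * (d - c + 1))).
  assert (HM : 0 < M) by (unfold M; apply Rdiv_lt_0_compat; [apply cond_pos | lra]).
  assert (Hnf := @norm_factor_gt_0 R_AbsRing C_R_NormedModule).
  set (e2 := M / (2 * @norm_factor R_AbsRing C_R_NormedModule)).
  assert (He2 : 0 < e2) by (unfold e2; apply Rdiv_lt_0_compat; lra).
  assert (Hd : forall t : R, exists del : posreal, forall q x,
             ball p del q -> ball t del x -> ball (f p t) e2 (f q x)).
  { intros t. specialize (Hc (p, t)).
    apply (proj1 (filterlim_locally _ _)) with (eps := mkposreal e2 He2) in Hc.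
    destruct Hc as [del Hdel]. exists del. intros q x H1 H2.
    apply (Hdel (q, x)). split; assumption. }
  set (delta := fun t => proj1_sig (constructive_indefinite_description _ (Hd t))).
  assert (Hdelta : forall t q x, ball p (delta t) q -> ball t (delta t) x -> ball (f p t) e2 (f q x)).
  { intros t. unfold delta. destruct (constructive_indefinite_description _ (Hd t)) as [dl Hdl]. exact Hdl. }
  destruct (compactness_value_1d c d delta) as [dd Hdd].
  exists dd. intros q Hq.
  apply (@norm_compat1 R_AbsRing C_R_NormedModule).
  unfold CInt. rewrite <- (RInt_minus (V:=C_R_CompleteNormedModule)) by auto.
  apply Rle_lt_trans with ((d - c) * M).
  - apply (norm_RInt_le_const (V := C_R_CompleteNormedModule)
        (fun x => minus (f q x) (f p x)) c d); auto.
    + intros x Hx. apply Rnot_lt_le. intros Hlt.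
      apply (Hdd x Hx). intros [t [Ht [Hxt Hdt]]].
      assert (B1 : ball (f p t) e2 (f q x)).
      { apply Hdelta. apply ball_le with dd; auto. exact Hxt. }
      assert (B2 : ball (f p t) e2 (f p x)).
      { apply Hdelta. apply ball_center. exact Hxt. }
      assert (B3 : ball (f p x) (e2 + e2) (f q x)).
      { apply ball_triangle with (f p t); auto. apply ball_sym; auto. }
      assert (N := norm_compat2 (V := C_R_NormedModule) (f p x) (f q x) (mkposreal _ (Rplus_lt_0_compat _ _ He2 He2)) B3).
      simpl in N.
      assert (Heq : @norm_factor R_AbsRing C_R_NormedModule * (e2 + e2) = M).
      { unfold e2. field. lra. }
      rewrite Heq in N. apply (Rlt_asym _ _ Hlt). exact N.
    + apply RInt_correct. apply ex_RInt_minus; auto.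
  - unfold M. apply Rle_lt_trans with ((d - c + 1) * (eps / (2 * (d - c + 1)))).
    + apply Rmult_le_compat_r; [ | lra]. apply Rlt_le, HM.
    + assert (0 < eps) by apply cond_pos. field_simplify; lra.
Qed.


Lemma is_RInt_C_fst (f : R -> C) a b l : is_RInt (V := C_R_CompleteNormedModule) f a b l ->
  is_RInt (fun t => fst (f t)) a b (fst l).
Proof. intros H. apply (is_RInt_fct_extend_fst (U:=R_NormedModule)(V:=R_NormedModule)). exact H. Qed.
Lemma is_RInt_C_snd (f : R -> C) a b l : is_RInt (V := C_R_CompleteNormedModule) f a b l ->
  is_RInt (fun t => snd (f t)) a b (snd l).
Proof. intros H. apply (is_RInt_fct_extend_snd (U:=R_NormedModule)(V:=R_NormedModule)). exact H. Qed.
Lemma is_RInt_C_pair (f : R -> C) a b l1 l2 :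
  is_RInt (fun t => fst (f t)) a b l1 -> is_RInt (fun t => snd (f t)) a b l2 ->
  is_RInt (V := C_R_CompleteNormedModule) f a b (l1, l2).
Proof. intros. apply (is_RInt_fct_extend_pair (U:=R_NormedModule)(V:=R_NormedModule)); auto. Qed.

Lemma CInt_Cmult (f : R -> C) (be : C) a b :
  ex_RInt (V := C_R_CompleteNormedModule) f a b ->
  CInt (fun x => Cmult be (f x)) a b = Cmult be (CInt f a b).
Proof.
  intros Hex. unfold CInt. apply (is_RInt_unique (V:=C_R_CompleteNormedModule)).
  destruct Hex as [l Hl]. rewrite (is_RInt_unique (V:=C_R_CompleteNormedModule) _ _ _ _ Hl).
  destruct be as [b1 b2]. destruct l as [l1 l2].
  apply is_RInt_C_fst in Hl as H1. apply is_RInt_C_snd in Hl as H2. simpl in H1, H2.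
  apply is_RInt_C_pair; simpl.
  - apply (is_RInt_ext (fun t => minus (scal b1 (fst (f t))) (scal b2 (snd (f t))))).
    { intros. reflexivity. }
    apply (is_RInt_minus (V:=R_NormedModule)); apply (is_RInt_scal (V:=R_NormedModule)); auto.
  - apply (is_RInt_ext (fun t => plus (scal b1 (snd (f t))) (scal b2 (fst (f t))))).
    { intros. reflexivity. }
    apply (is_RInt_plus (V:=R_NormedModule)); apply (is_RInt_scal (V:=R_NormedModule)); auto.
Qed.

Lemma Cscal_assoc (a b : R) (z : C) :
  @scal R_Ring C_R_CompleteNormedModule a (@scal R_Ring C_R_CompleteNormedModule b z) = @scal R_Ring C_R_CompleteNormedModule (a * b) z.
Proof. destruct z as [z1 z2]. unfold scal. simpl. unfold prod_scal. simpl. f_equal; unfold scal; simpl; unfold mult; simpl; ring. Qed.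

Definition Dbl (H : R -> R -> C) (c d : R) : C :=
  CInt (fun x1 => CInt (fun x2 => H x1 x2) c d) c d.

Definition cont2 (H : R -> R -> C) :=
  forall z : R * R, continuous (U := C_R_CompleteNormedModule) (fun z => H (fst z) (snd z)) z.

Lemma dbl_ex_inner H x1 c d : cont2 H -> ex_RInt (V := C_R_CompleteNormedModule) (H x1) c d.
Proof. intros Hc. apply (ex_sec (T:=R_UniformSpace) H). exact Hc. Qed.

Lemma dbl_cont_outer H c d p : c <= d -> cont2 H ->
  continuous (U := C_R_CompleteNormedModule) (fun x1 => CInt (fun x2 => H x1 x2) c d) p.
Proof. intros Hcd Hc. apply (param_cont (T:=R_UniformSpace) H); auto. Qed.

Lemma dbl_ex_outer H c d : c <= d -> cont2 H ->
  ex_RInt (V := C_R_CompleteNormedModule) (fun x1 => CInt (fun x2 => H x1 x2) c d) c d.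
Proof. intros. apply ex_RInt_continuous. intros. apply dbl_cont_outer; auto. Qed.

Lemma dbl_param {T : UniformSpace} (H : T -> R -> R -> C) c d p : c <= d ->
  (forall z : (T * R) * R, continuous (U := C_R_CompleteNormedModule)
      (fun z => H (fst (fst z)) (snd (fst z)) (snd z)) z) ->
  continuous (U := C_R_CompleteNormedModule) (fun q => Dbl (H q) c d) p.
Proof.
  intros Hcd Hc. unfold Dbl.
  apply (param_cont (fun q x1 => CInt (fun x2 => H q x1 x2) c d)); auto.
  intros z.
  apply (param_cont (T := prod_UniformSpace T R_UniformSpace)
           (fun qx x2 => H (fst qx) (snd qx) x2)); auto.
Qed.

Lemma cont2_of3 {T : UniformSpace} (H : T -> R -> R -> C) q :
  (forall z : (T * R) * R, continuous (U := C_R_CompleteNormedModule)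
      (fun z => H (fst (fst z)) (snd (fst z)) (snd z)) z) -> cont2 (H q).
Proof.
  intros Hc z.
  apply (continuous_comp (fun z : R * R => ((q, fst z), snd z))
          (fun z => H (fst (fst z)) (snd (fst z)) (snd z))).
  - apply cpair. apply cpair. apply continuous_const. apply (cfst (fun z => z)); apply continuous_id.
    apply (csnd (fun z => z)); apply continuous_id.
  - apply Hc.
Qed.

Lemma dbl_minus H1 H2 c d : c <= d -> cont2 H1 -> cont2 H2 ->
  Cminus (Dbl H1 c d) (Dbl H2 c d) = Dbl (fun u1 u2 => Cminus (H1 u1 u2) (H2 u1 u2)) c d.
Proof.
  intros Hcd C1 C2. unfold Dbl, CInt.
  change (Cminus ?x ?y) with (@minus C_R_CompleteNormedModule x y) at 1.
  rewrite <- (RInt_minus (V:=C_R_CompleteNormedModule)) by (apply dbl_ex_outer; auto).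
  apply (RInt_ext (V:=C_R_CompleteNormedModule)). intros x _.
  rewrite <- (RInt_minus (V:=C_R_CompleteNormedModule)) by (apply dbl_ex_inner; auto).
  reflexivity.
Qed.

Lemma dbl_Cmult H be c d : c <= d -> cont2 H ->
  Cmult be (Dbl H c d) = Dbl (fun u1 u2 => Cmult be (H u1 u2)) c d.
Proof.
  intros Hcd C1. unfold Dbl.
  rewrite <- CInt_Cmult by (apply dbl_ex_outer; auto).
  unfold CInt. apply (RInt_ext (V:=C_R_CompleteNormedModule)). intros x _.
  symmetry. apply CInt_Cmult. apply dbl_ex_inner; auto.
Qed.

Lemma CInt_bound (f : R -> C) c d M : c <= d -> ex_RInt (V := C_R_CompleteNormedModule) f c d ->
  (forall x, c <= x <= d -> Cmod (f x) <= M) -> Cmod (CInt f c d) <= (d - c) * M.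
Proof.
  intros Hcd Hex Hb. rewrite Cmod_norm.
  apply (norm_RInt_le_const (V := C_R_CompleteNormedModule) f c d); auto.
  intros x Hx. rewrite <- Cmod_norm. auto.
  apply RInt_correct; auto.
Qed.

Lemma dbl_bound H c d M : c <= d -> cont2 H ->
  (forall u1 u2, c <= u1 <= d -> c <= u2 <= d -> Cmod (H u1 u2) <= M) ->
  Cmod (Dbl H c d) <= (d - c) * ((d - c) * M).
Proof.
  intros Hcd C1 Hb. unfold Dbl.
  apply CInt_bound; auto. apply dbl_ex_outer; auto.
  intros x Hx. apply CInt_bound; auto. apply dbl_ex_inner; auto.
Qed.

Lemma cont2_scale H l : cont2 H -> cont2 (fun u1 u2 => H (l * u1) (l * u2)).
Proof.
  intros Hc z.
  apply (continuous_comp (fun z : R * R => (l * fst z, l * snd z))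
          (fun z => H (fst z) (snd z))).
  - apply cpair; apply cR_mult; try apply cR_const.
    apply (cfst (fun z => z)); apply continuous_id.
    apply (csnd (fun z => z)); apply continuous_id.
  - apply Hc.
Qed.

Lemma dbl_scale H l : 0 < l -> cont2 H ->
  Dbl H (-l) l = scal (l * l) (Dbl (fun u1 u2 => H (l * u1) (l * u2)) (-1) 1).
Proof.
  intros Hl Hc. unfold Dbl, CInt.
  assert (E1 : forall x, RInt (V:=C_R_CompleteNormedModule) (fun x2 => H x x2) (-l) l
                 = scal l (RInt (V:=C_R_CompleteNormedModule) (fun u2 => H x (l * u2)) (-1) 1)).
  { intros x.
    rewrite <- (RInt_scal (V:=C_R_CompleteNormedModule)).
    2:{ apply ex_RInt_continuous. intros z _.
        apply (continuous_comp (fun u => l * u) (H x)).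
        apply cR_mult. apply cR_const. apply continuous_id.
        apply (cont_sec (T:=R_UniformSpace) H). exact Hc. }
    transitivity (RInt (V:=C_R_CompleteNormedModule) (fun u2 => scal l (H x (l * u2 + 0))) (-1) 1).
    2:{ apply (RInt_ext (V:=C_R_CompleteNormedModule)). intros; rewrite Rplus_0_r; reflexivity. }
    etransitivity; [|symmetry; apply (RInt_comp_lin (V:=C_R_CompleteNormedModule) (H x) l 0 (-1) 1)].
    f_equal; ring.
    replace (l * -1 + 0) with (-l) by ring. replace (l * 1 + 0) with l by ring.
    apply dbl_ex_inner; auto. }
  assert (Cs := cont2_scale H l Hc).
  rewrite (RInt_ext (V:=C_R_CompleteNormedModule) _ _ _ _ (fun x _ => E1 x)).
  transitivity (RInt (V:=C_R_CompleteNormedModule)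
     (fun u1 => scal l (scal l (RInt (V:=C_R_CompleteNormedModule) (fun u2 => H (l * u1) (l * u2)) (-1) 1))) (-1) 1).
  - set (G := fun x => scal l (RInt (V:=C_R_CompleteNormedModule) (fun u2 => H x (l * u2)) (-1) 1)).
    transitivity (RInt (V:=C_R_CompleteNormedModule) G (l * -1 + 0) (l * 1 + 0)).
    { f_equal; ring. }
    etransitivity; [symmetry; apply (RInt_comp_lin (V:=C_R_CompleteNormedModule) G l 0 (-1) 1) |].
    + replace (l * -1 + 0) with (-l) by ring. replace (l * 1 + 0) with l by ring.
      apply (ex_RInt_ext (fun x1 => RInt (V:=C_R_CompleteNormedModule) (fun x2 => H x1 x2) (-l) l)).
      intros; apply E1. apply dbl_ex_outer; auto. lra.
    + apply (RInt_ext (V:=C_R_CompleteNormedModule)). intros. unfold G. rewrite Rplus_0_r.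
      generalize (@RInt C_R_CompleteNormedModule (fun u2 : R => H (l * x) (l * u2)) (-1) 1). intro X. reflexivity.
  - assert (Hi : ex_RInt (V:=C_R_CompleteNormedModule)
        (fun u1 => RInt (V:=C_R_CompleteNormedModule) (fun u2 => H (l * u1) (l * u2)) (-1) 1) (-1) 1).
    { apply (dbl_ex_outer _ (-1) 1); auto; lra. }
    pose (Inn := fun u1 => RInt (V:=C_R_CompleteNormedModule) (fun u2 => H (l * u1) (l * u2)) (-1) 1).
    change (RInt (V:=C_R_CompleteNormedModule) (fun u1 => scal l (scal l (Inn u1))) (-1) 1
            = scal (l * l) (RInt (V:=C_R_CompleteNormedModule) Inn (-1) 1)).
    assert (HInn : ex_RInt (V:=C_R_CompleteNormedModule) Inn (-1) 1) by exact Hi.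
    clearbody Inn.
    rewrite (RInt_scal (V:=C_R_CompleteNormedModule) (fun u1 => scal l (Inn u1)) (-1) 1 l).
    rewrite (RInt_scal (V:=C_R_CompleteNormedModule) Inn (-1) 1 l) by exact HInn.
    generalize (@RInt C_R_CompleteNormedModule Inn (-1) 1). intros X. rewrite scal_assoc. reflexivity.
    apply (ex_RInt_scal (V:=C_R_CompleteNormedModule) Inn (-1) 1 l HInn).
Qed.


Lemma div_le_gen a c e bb : 0 <= a -> a <= c -> 0 < e -> e <= bb -> a / bb <= c / e.
Proof.
  intros. unfold Rdiv. apply Rmult_le_compat; auto.
  apply Rlt_le, Rinv_0_lt_compat; lra.
  apply Rinv_le_contravar; lra.
Qed.

Lemma sq_ge (D q : R) : 0 <= D -> 0 < q -> q ^ 2 <= D ^ 2 -> q <= D.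
Proof. intros. nra. Qed.

Definition PhiT (eta om v k p1 p2 N l0 u1 u2 : R) : R :=
  om * N / (eta * k * v) - om / (2 * k * v) * (1 - / k ^ 2) * ((k ^ 2 * p1) ^ 2 + (k ^ 2 * p2) ^ 2) / N
  - om * l0 * (u1 * (k ^ 2 * p1) + u2 * (k ^ 2 * p2)) / (k * v * N)
  + om * l0 ^ 2 * k ^ 2 * (u1 ^ 2 + u2 ^ 2) / (2 * k * v * N).

Definition Mgen (k p1 p2 l0 : R) := 2 * (p1 ^ 2 + p2 ^ 2) + 4 * l0 ^ 2 + k ^ 2 * (p1 ^ 2 + p2 ^ 2).

Lemma phase_gen (eta om b v k p1 p2 q l0 u1 u2 D N : R) :
  0 < eta <= 1 -> 0 <= om <= b -> 0 < v -> 0 < k -> 0 < q ->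
  Rabs u1 <= 1 -> Rabs u2 <= 1 ->
  0 <= D -> D ^ 2 = q ^ 2 + eta * ((p1 - l0 * u1) ^ 2 + (p2 - l0 * u2) ^ 2) ->
  0 <= N -> N ^ 2 = k ^ 2 * (q ^ 2 + eta * (k ^ 2 * (p1 ^ 2 + p2 ^ 2))) ->
  Rabs (om / eta / v * D - PhiT eta om v k p1 p2 N l0 u1 u2)
    <= eta * (b / v * Mgen k p1 p2 l0 ^ 2 / (2 * q ^ 3)) /\
  Rabs (/ D - k / N) <= eta * (Mgen k p1 p2 l0 / q ^ 3).
Proof.
  intros He Hom Hv Hk Hq Hu1 Hu2 HD0 HD HN0 HN.
  set (S := N / k).
  set (P2 := p1 ^ 2 + p2 ^ 2).
  set (dd := (p1 - l0 * u1) ^ 2 + (p2 - l0 * u2) ^ 2).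
  set (De := dd - k ^ 2 * P2).
  set (M := Mgen k p1 p2 l0).
  assert (HS2 : S ^ 2 = q ^ 2 + eta * (k ^ 2 * P2)).
  { unfold S. replace ((N / k) ^ 2) with (N ^ 2 / k ^ 2) by (field; lra).
    rewrite HN. unfold P2. field. lra. }
  assert (HP2 : 0 <= P2) by (unfold P2; nra).
  assert (Hdd : 0 <= dd) by (unfold dd; apply Rplus_le_le_0_compat; apply pow2_ge_0).
  assert (HS0 : 0 <= S) by (unfold S; apply Rdiv_le_0_compat; lra).
  assert (HSq : q <= S).
  { apply sq_ge; auto. rewrite HS2.
    assert (0 <= eta * (k ^ 2 * P2)) by (apply Rmult_le_pos; [lra| apply Rmult_le_pos; [apply pow2_ge_0|lra]]).
    lra. }
  assert (HDq : q <= D).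
  { apply sq_ge; auto. rewrite HD. fold dd.
    assert (0 <= eta * dd) by (apply Rmult_le_pos; lra). lra. }
  assert (HDS2 : D ^ 2 - S ^ 2 = eta * De) by (rewrite HD, HS2; unfold De; fold dd; ring).
  assert (HDS : D - S = eta * De / (D + S)).
  { field_simplify_eq; [|lra]. replace ((D - S) * (D + S)) with (D ^ 2 - S ^ 2) by ring. exact HDS2. }
  assert (Hu1' : u1 ^ 2 <= 1) by (rewrite <- (pow2_abs u1); pose proof (Rabs_pos u1); nra).
  assert (Hu2' : u2 ^ 2 <= 1) by (rewrite <- (pow2_abs u2); pose proof (Rabs_pos u2); nra).
  assert (HDeM : Rabs De <= M).
  { unfold M, Mgen, De, dd. fold P2.
    assert (dd <= 2 * P2 + 4 * l0 ^ 2).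
    { unfold dd, P2.
      assert (0 <= (p1 + l0 * u1) ^ 2) by apply pow2_ge_0.
      assert (0 <= (p2 + l0 * u2) ^ 2) by apply pow2_ge_0.
      assert (0 <= l0 ^ 2 * (1 - u1 ^ 2)) by (apply Rmult_le_pos; [apply pow2_ge_0|lra]).
      assert (0 <= l0 ^ 2 * (1 - u2 ^ 2)) by (apply Rmult_le_pos; [apply pow2_ge_0|lra]).
      nra. }
    unfold dd in H. apply Rabs_le.
    assert (0 <= k ^ 2 * P2) by (apply Rmult_le_pos; [apply pow2_ge_0|lra]).
    assert (0 <= dd) by exact Hdd. unfold dd in *. split; lra. }
  assert (HM0 : 0 <= M) by (apply Rle_trans with (Rabs De); [apply Rabs_pos|auto]).
  assert (HSp : 0 < S) by lra.
  assert (HNp : 0 < N).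
  { replace N with (S * k) by (unfold S; field; lra). apply Rmult_lt_0_compat; lra. }
  assert (HPhi : PhiT eta om v k p1 p2 N l0 u1 u2 = om * S / (eta * v) + om * De / (2 * v * S)).
  { unfold PhiT, De, dd, P2, S. field. repeat split; lra. }
  split.
  - rewrite HPhi.
    replace (om / eta / v * D - (om * S / (eta * v) + om * De / (2 * v * S)))
      with (om / (eta * v) * (D - S) - om * De / (2 * v * S)) by (field; lra).
    rewrite HDS.
    replace (om / (eta * v) * (eta * De / (D + S)) - om * De / (2 * v * S))
      with (om * De / v * ((S - D) / (2 * S * (D + S)))) by (field; lra).
    replace (S - D) with (- (D - S)) by ring. rewrite HDS.
    replace (om * De / v * (- (eta * De / (D + S)) / (2 * S * (D + S))))
      with (- (eta * (om / v * De ^ 2 / (2 * S * (D + S) ^ 2)))) by (field; lra).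
    rewrite Rabs_Ropp, Rabs_mult, (Rabs_right eta) by lra.
    apply Rmult_le_compat_l; [lra|].
    rewrite Rabs_right.
    2:{ apply Rle_ge. apply Rdiv_le_0_compat. apply Rmult_le_pos. apply Rdiv_le_0_compat; lra. apply pow2_ge_0.
        apply Rmult_lt_0_compat; [lra | apply pow_lt; lra]. }
    replace (b / v * M ^ 2 / (2 * q ^ 3)) with (b / v * M ^ 2 / (2 * q * q ^ 2)) by (field; lra).
    apply div_le_gen.
    + apply Rmult_le_pos. apply Rdiv_le_0_compat; lra. apply pow2_ge_0.
    + apply Rmult_le_compat. apply Rdiv_le_0_compat; lra. apply pow2_ge_0.
      unfold Rdiv. apply Rmult_le_compat_r. apply Rlt_le, Rinv_0_lt_compat; lra. lra.
      replace (De ^ 2) with (Rabs De ^ 2) by apply pow2_abs.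
      apply pow_incr. split; [apply Rabs_pos|auto].
    + apply Rmult_lt_0_compat; [lra | apply pow_lt; lra].
    + apply Rmult_le_compat. lra. apply Rlt_le, pow_lt; lra. lra. apply pow_incr. lra.
  - replace (k / N) with (/ S) by (unfold S; field; lra).
    replace (/ D - / S) with (- ((D - S) / (D * S))) by (field; lra).
    rewrite HDS.
    replace (eta * De / (D + S) / (D * S)) with (eta * (De / ((D + S) * D * S))) by (field; lra).
    rewrite Rabs_Ropp, Rabs_mult, (Rabs_right eta) by lra.
    apply Rmult_le_compat_l; [lra|].
    unfold Rdiv. rewrite Rabs_mult. rewrite (Rabs_right (/ _)).
    2:{ apply Rle_ge, Rlt_le, Rinv_0_lt_compat. assert (0 < D + S) by lra. assert (0 < D * S) by nra. nra. }
    fold (Rabs De / ((D + S) * D * S)).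
    replace (q ^ 3) with (q * q * q) by ring.
    apply div_le_gen; auto. apply Rabs_pos.
    assert (0 < q * q) by nra. nra.
    apply Rmult_le_compat. nra. lra. apply Rmult_le_compat; lra. lra.
Qed.


Lemma Cmod_le_sum (x y : R) : Cmod (x, y) <= Rabs x + Rabs y.
Proof.
  unfold Cmod. simpl.
  rewrite <- (sqrt_pow2 (Rabs x + Rabs y)) by (pose proof (Rabs_pos x); pose proof (Rabs_pos y); lra).
  apply sqrt_le_1_alt.
  rewrite <- (pow2_abs x) at 1. rewrite <- (pow2_abs y) at 1.
  pose proof (Rabs_pos x); pose proof (Rabs_pos y). simpl. nra.
Qed.

Lemma sin_lip (p q : R) : Rabs (sin p - sin q) <= Rabs (p - q).
Proof.
  destruct (MVT_abs sin cos q p) as [c0 [Hc _]].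
  { intros. apply derivable_pt_lim_sin. }
  rewrite Hc. pose proof (COS_bound c0). pose proof (Rabs_pos (p - q)).
  assert (Rabs (cos c0) <= 1) by (apply Rabs_le; lra). nra.
Qed.

Lemma cos_lip (p q : R) : Rabs (cos p - cos q) <= Rabs (p - q).
Proof.
  destruct (MVT_abs cos (fun x => - sin x) q p) as [c0 [Hc _]].
  { intros. apply derivable_pt_lim_cos. }
  rewrite Hc. pose proof (SIN_bound c0). pose proof (Rabs_pos (p - q)).
  assert (Rabs (- sin c0) <= 1) by (apply Rabs_le; lra). nra.
Qed.

Lemma cexpi_diff (p q : R) : Cmod (Cminus (cexpi p) (cexpi q)) <= 2 * Rabs (p - q).
Proof.
  unfold cexpi, Cminus, Cplus, Copp. simpl.
  eapply Rle_trans. apply Cmod_le_sum.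
  pose proof (sin_lip p q). pose proof (cos_lip p q).
  replace (cos p + - cos q) with (cos p - cos q) by ring.
  replace (sin p + - sin q) with (sin p - sin q) by ring. lra.
Qed.

Lemma Cmod_cexpi (p : R) : Cmod (cexpi p) = 1.
Proof.
  assert (H : cos p ^ 2 + sin p ^ 2 = 1).
  { pose proof (sin2_cos2 p) as H. unfold Rsqr in H. simpl. lra. }
  unfold Cmod, cexpi. simpl fst; simpl snd. rewrite H. apply sqrt_1.
Qed.

Lemma Cmod_RtoC_cexpi (s p : R) : Cmod (Cmult (RtoC s) (cexpi p)) = Rabs s.
Proof. rewrite Cmod_mult, Cmod_cexpi, Cmod_R. ring. Qed.

Lemma Kdiff (A s P Q : R) :
  Cmod (Cminus (Cmult (RtoC A) (cexpi P)) (Cmult (RtoC s) (cexpi Q)))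
    <= Rabs (A - s) + Rabs s * (2 * Rabs (P - Q)).
Proof.
  replace (Cminus (Cmult (RtoC A) (cexpi P)) (Cmult (RtoC s) (cexpi Q)))
    with (Cplus (Cmult (RtoC (A - s)) (cexpi P)) (Cmult (RtoC s) (Cminus (cexpi P) (cexpi Q)))).
  2:{ unfold Cminus, Cplus, Cmult, Copp, RtoC, cexpi. simpl. apply injective_projections; simpl; ring. }
  eapply Rle_trans. apply Cmod_triangle.
  rewrite Cmod_RtoC_cexpi. rewrite Cmod_mult, Cmod_R.
  apply Rplus_le_compat_l. apply Rmult_le_compat_l. apply Rabs_pos. apply cexpi_diff.
Qed.

Lemma gamma_prod (k1 k2 : R) (z y x : pt) :
  Cmult (Gamma k1 z x) (Cconj (Gamma k2 y x)) =
  Cmult (RtoC (/ (4 * PI * dist3 z x) * / (4 * PI * dist3 y x))) (cexpi (k1 * dist3 z x - k2 * dist3 y x)).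
Proof.
  unfold Gamma, Cmult, Cconj, RtoC, cexpi. simpl.
  rewrite cos_minus, sin_minus.
  apply injective_projections; simpl; ring.
Qed.

Lemma cexpi_add (p q : R) : Cmult (cexpi p) (cexpi q) = cexpi (p + q).
Proof.
  unfold cexpi, Cmult. simpl. rewrite cos_plus, sin_plus.
  apply injective_projections; simpl; ring.
Qed.

Lemma Csq_diff (J J' : C) : Cmod (Cminus (Cmult J J) (Cmult J' J')) <= Cmod (Cminus J J') * (Cmod J + Cmod J').
Proof.
  replace (Cminus (Cmult J J) (Cmult J' J')) with (Cmult (Cminus J J') (Cplus J J')).
  2:{ destruct J, J'. unfold Cminus, Cplus, Cmult, Copp. simpl. apply injective_projections; simpl; ring. }
  rewrite Cmod_mult. apply Rmult_le_compat_l. apply Cmod_ge_0. apply Cmod_triangle.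
Qed.


Definition hh (c cs eta zp1 zp2 zpar yp1 yp2 ypar w x1 x2 : R) : C :=
  Cmult (Gamma (w / c) (parax eta zp1 zp2 zpar) (mkpt x1 x2 0))
        (Cconj (Gamma (w / cs) (parax eta yp1 yp2 ypar) (mkpt x1 x2 0))).

Lemma dist_sq (eta l0 p1 p2 q u1 u2 : R) : 0 < eta ->
  let D := dist3 (parax eta p1 p2 q) (mkpt (sqrt eta * l0 * u1) (sqrt eta * l0 * u2) 0) in
  0 <= D /\ D ^ 2 = q ^ 2 + eta * ((p1 - l0 * u1) ^ 2 + (p2 - l0 * u2) ^ 2).
Proof.
  intros He D. unfold D, dist3, parax, mkpt.
  assert (Hs : sqrt eta ^ 2 = eta) by (apply pow2_sqrt; lra).
  split. apply sqrt_pos.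
  rewrite pow2_sqrt.
  - replace ((sqrt eta * p1 - sqrt eta * l0 * u1) ^ 2) with (sqrt eta ^ 2 * (p1 - l0 * u1) ^ 2) by ring.
    replace ((sqrt eta * p2 - sqrt eta * l0 * u2) ^ 2) with (sqrt eta ^ 2 * (p2 - l0 * u2) ^ 2) by ring.
    rewrite Hs. ring.
  - repeat apply Rplus_le_le_0_compat; apply pow2_ge_0.
Qed.

Lemma inv_le_of (D q : R) : 0 < q -> q <= D -> / D <= / q.
Proof. intros. apply Rinv_le_contravar; lra. Qed.

Lemma core (c cs l0 a b zp1 zp2 zpar yp1 yp2 ypar kz ky : R) :
  0 < c -> 0 < cs -> 0 < l0 -> 0 < a -> a < b -> 0 < zpar -> 0 < ypar -> 0 < kz -> 0 < ky ->
  exists CK, forall eta om u1 u2 Nz Ny,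
    0 < eta <= 1 -> a <= om <= b -> Rabs u1 <= 1 -> Rabs u2 <= 1 ->
    0 <= Nz -> Nz ^ 2 = kz ^ 2 * (zpar ^ 2 + eta * (kz ^ 2 * (zp1 ^ 2 + zp2 ^ 2))) ->
    0 <= Ny -> Ny ^ 2 = ky ^ 2 * (ypar ^ 2 + eta * (ky ^ 2 * (yp1 ^ 2 + yp2 ^ 2))) ->
    Cmod (Cminus (hh c cs eta zp1 zp2 zpar yp1 yp2 ypar (om / eta) (sqrt eta * l0 * u1) (sqrt eta * l0 * u2))
                 (Cmult (RtoC (kz / Nz * (ky / Ny) / (16 * PI ^ 2)))
                        (cexpi (PhiT eta om c kz zp1 zp2 Nz l0 u1 u2 - PhiT eta om cs ky yp1 yp2 Ny l0 u1 u2))))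
      <= eta * CK.
Proof.
  intros Hc Hcs Hl0 Ha Hab Hzp Hyp Hkz Hky.
  set (CAz := Mgen kz zp1 zp2 l0 / zpar ^ 3).
  set (CAy := Mgen ky yp1 yp2 l0 / ypar ^ 3).
  set (CPz := b / c * Mgen kz zp1 zp2 l0 ^ 2 / (2 * zpar ^ 3)).
  set (CPy := b / cs * Mgen ky yp1 yp2 l0 ^ 2 / (2 * ypar ^ 3)).
  assert (HPI : 0 < 16 * PI ^ 2) by (pose proof PI_RGT_0; assert (0 < PI ^ 2) by (apply pow_lt; lra); lra).
  exists ((CAz / ypar + / zpar * CAy) / (16 * PI ^ 2) + / zpar * / ypar / (16 * PI ^ 2) * (2 * (CPz + CPy))).
  intros eta om u1 u2 Nz Ny He Hom Hu1 Hu2 HNz0 HNz HNy0 HNy.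
  destruct (dist_sq eta l0 zp1 zp2 zpar u1 u2 (proj1 He)) as [HDz0 HDz].
  destruct (dist_sq eta l0 yp1 yp2 ypar u1 u2 (proj1 He)) as [HDy0 HDy].
  set (Dz := dist3 (parax eta zp1 zp2 zpar) (mkpt (sqrt eta * l0 * u1) (sqrt eta * l0 * u2) 0)) in *.
  set (Dy := dist3 (parax eta yp1 yp2 ypar) (mkpt (sqrt eta * l0 * u1) (sqrt eta * l0 * u2) 0)) in *.
  assert (Hom' : 0 <= om <= b) by lra.
  destruct (phase_gen eta om b c kz zp1 zp2 zpar l0 u1 u2 Dz Nz He Hom' Hc Hkz Hzp Hu1 Hu2 HDz0 HDz HNz0 HNz)
    as [Pz Az].
  destruct (phase_gen eta om b cs ky yp1 yp2 ypar l0 u1 u2 Dy Ny He Hom' Hcs Hky Hyp Hu1 Hu2 HDy0 HDy HNy0 HNy)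
    as [Py Ay].
  fold CPz in Pz. fold CPy in Py. fold CAz in Az. fold CAy in Ay.
  assert (HDzq : zpar <= Dz).
  { apply sq_ge; auto. rewrite HDz. assert (0 <= eta * ((zp1 - l0 * u1) ^ 2 + (zp2 - l0 * u2) ^ 2)).
    apply Rmult_le_pos. lra. apply Rplus_le_le_0_compat; apply pow2_ge_0. lra. }
  assert (HDyq : ypar <= Dy).
  { apply sq_ge; auto. rewrite HDy. assert (0 <= eta * ((yp1 - l0 * u1) ^ 2 + (yp2 - l0 * u2) ^ 2)).
    apply Rmult_le_pos. lra. apply Rplus_le_le_0_compat; apply pow2_ge_0. lra. }
  assert (HNzq : kz * zpar <= Nz).
  { apply sq_ge; auto. apply Rmult_lt_0_compat; lra. rewrite HNz.
    assert (0 <= kz ^ 2 * (eta * (kz ^ 2 * (zp1 ^ 2 + zp2 ^ 2)))).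
    { apply Rmult_le_pos. apply pow2_ge_0. apply Rmult_le_pos. lra. apply Rmult_le_pos. apply pow2_ge_0.
      apply Rplus_le_le_0_compat; apply pow2_ge_0. }
    replace ((kz * zpar) ^ 2) with (kz ^ 2 * zpar ^ 2) by ring. lra. }
  assert (HNyq : ky * ypar <= Ny).
  { apply sq_ge; auto. apply Rmult_lt_0_compat; lra. rewrite HNy.
    assert (0 <= ky ^ 2 * (eta * (ky ^ 2 * (yp1 ^ 2 + yp2 ^ 2)))).
    { apply Rmult_le_pos. apply pow2_ge_0. apply Rmult_le_pos. lra. apply Rmult_le_pos. apply pow2_ge_0.
      apply Rplus_le_le_0_compat; apply pow2_ge_0. }
    replace ((ky * ypar) ^ 2) with (ky ^ 2 * ypar ^ 2) by ring. lra. }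
  assert (HkNz : 0 < kz / Nz <= / zpar).
  { assert (0 < kz * zpar) by (apply Rmult_lt_0_compat; lra).
    assert (0 < Nz) by lra.
    split. apply Rdiv_lt_0_compat; lra.
    apply (Rmult_le_reg_r (Nz * zpar)). apply Rmult_lt_0_compat; lra.
    replace (kz / Nz * (Nz * zpar)) with (kz * zpar) by (field; repeat split; lra).
    replace (/ zpar * (Nz * zpar)) with Nz by (field; repeat split; lra). lra. }
  assert (HkNy : 0 < ky / Ny <= / ypar).
  { assert (0 < ky * ypar) by (apply Rmult_lt_0_compat; lra).
    assert (0 < Ny) by lra.
    split. apply Rdiv_lt_0_compat; lra.
    apply (Rmult_le_reg_r (Ny * ypar)). apply Rmult_lt_0_compat; lra.
    replace (ky / Ny * (Ny * ypar)) with (ky * ypar) by (field; repeat split; lra).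
    replace (/ ypar * (Ny * ypar)) with Ny by (field; repeat split; lra). lra. }
  assert (HiDz : 0 < / Dz <= / zpar) by (split; [apply Rinv_0_lt_compat; lra | apply inv_le_of; lra]).
  assert (HiDy : 0 < / Dy <= / ypar) by (split; [apply Rinv_0_lt_compat; lra | apply inv_le_of; lra]).
  pose proof PI_RGT_0 as HPI0.
  assert (0 < kz * zpar) by (apply Rmult_lt_0_compat; lra).
  assert (0 < ky * ypar) by (apply Rmult_lt_0_compat; lra).
  assert (0 < Nz) by lra. assert (0 < Ny) by lra. assert (0 < Dz) by lra. assert (0 < Dy) by lra.
  unfold hh. rewrite gamma_prod. fold Dz Dy.
  eapply Rle_trans. apply Kdiff.
  replace (/ (4 * PI * Dz) * / (4 * PI * Dy)) with (/ Dz * / Dy / (16 * PI ^ 2))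
    by (pose proof PI_RGT_0; field; repeat split; lra).
  replace (/ Dz * / Dy / (16 * PI ^ 2) - kz / Nz * (ky / Ny) / (16 * PI ^ 2))
    with (((/ Dz - kz / Nz) * / Dy + kz / Nz * (/ Dy - ky / Ny)) / (16 * PI ^ 2)) by (field; repeat split; lra).
  replace (om / eta / c * Dz - om / eta / cs * Dy -
     (PhiT eta om c kz zp1 zp2 Nz l0 u1 u2 - PhiT eta om cs ky yp1 yp2 Ny l0 u1 u2))
    with ((om / eta / c * Dz - PhiT eta om c kz zp1 zp2 Nz l0 u1 u2)
          - (om / eta / cs * Dy - PhiT eta om cs ky yp1 yp2 Ny l0 u1 u2)) by ring.
  rewrite Rmult_plus_distr_l.
  apply Rplus_le_compat.
  - unfold Rdiv at 1. rewrite Rabs_mult, (Rabs_right (/ (16 * PI ^ 2))).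
    2:{ apply Rle_ge, Rlt_le, Rinv_0_lt_compat; lra. }
    replace (eta * ((CAz / ypar + / zpar * CAy) / (16 * PI ^ 2)))
      with ((eta * CAz * / ypar + / zpar * (eta * CAy)) * / (16 * PI ^ 2)) by (field; repeat split; lra).
    apply Rmult_le_compat_r. apply Rlt_le, Rinv_0_lt_compat; lra.
    eapply Rle_trans. apply Rabs_triang.
    rewrite !Rabs_mult.
    rewrite (Rabs_right (/ Dy)) by lra. rewrite (Rabs_right (kz / Nz)) by lra.
    apply Rplus_le_compat.
    + apply Rmult_le_compat; try apply Rabs_pos; lra.
    + apply Rmult_le_compat; try apply Rabs_pos; lra.
  - assert (Hs0 : 0 <= kz / Nz * (ky / Ny) / (16 * PI ^ 2)).
    { apply Rdiv_le_0_compat; [|lra]. apply Rmult_le_pos; lra. }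
    rewrite (Rabs_right _ (Rle_ge _ _ Hs0)).
    replace (eta * (/ zpar * / ypar / (16 * PI ^ 2) * (2 * (CPz + CPy))))
      with (/ zpar * / ypar / (16 * PI ^ 2) * (2 * (eta * CPz + eta * CPy))) by ring.
    apply Rmult_le_compat.
    + exact Hs0.
    + apply Rmult_le_pos; [lra|apply Rabs_pos].
    + unfold Rdiv. apply Rmult_le_compat_r. apply Rlt_le, Rinv_0_lt_compat; lra.
      apply Rmult_le_compat; lra.
    + apply Rmult_le_compat_l. lra.
      eapply Rle_trans. apply Rabs_triang. rewrite Rabs_Ropp. lra.
Qed.


Lemma sum3_pos (A B q : R) : 0 < q -> 0 < A ^ 2 + B ^ 2 + (q - 0) ^ 2.
Proof.
  intros. apply Rplus_le_lt_0_compat. apply Rplus_le_le_0_compat; apply pow2_ge_0.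
  apply pow_lt; lra.
Qed.

Lemma hh_cont3 (c cs eta zp1 zp2 zpar yp1 yp2 ypar : R) :
  0 < c -> 0 < cs -> 0 < zpar -> 0 < ypar ->
  forall z : (R * R) * R, continuous (U := C_R_CompleteNormedModule)
    (fun z => hh c cs eta zp1 zp2 zpar yp1 yp2 ypar (fst (fst z)) (snd (fst z)) (snd z)) z.
Proof.
  intros Hc Hcs Hz Hy z.
  apply (continuous_ext (U:=C_R_CompleteNormedModule) (fun z : (R * R) * R =>
     Cmult (RtoC (/ (4 * PI * dist3 (parax eta zp1 zp2 zpar) (mkpt (snd (fst z)) (snd z) 0))
                 * / (4 * PI * dist3 (parax eta yp1 yp2 ypar) (mkpt (snd (fst z)) (snd z) 0))))
           (cexpi (fst (fst z) / c * dist3 (parax eta zp1 zp2 zpar) (mkpt (snd (fst z)) (snd z) 0)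
                   - fst (fst z) / cs * dist3 (parax eta yp1 yp2 ypar) (mkpt (snd (fst z)) (snd z) 0))))).
  { intros x. unfold hh. symmetry. apply gamma_prod. }
  cbv [dist3 parax mkpt].
  pose proof PI_RGT_0.
  repeat (cont_step; cbn beta).
  all: try (apply Rgt_not_eq, Rlt_gt; apply Rmult_lt_0_compat; [lra|]; apply sqrt_lt_R0; apply sum3_pos; lra).
  all: try lra. all: match goal with |- ?g => idtac g end.
Qed.


Definition JJ (c cs eta l0 zp1 zp2 zpar yp1 yp2 ypar om : R) : C :=
  Dbl (fun u1 u2 => hh c cs eta zp1 zp2 zpar yp1 yp2 ypar (om / eta) (sqrt eta * l0 * u1) (sqrt eta * l0 * u2)) (-1) 1.

Lemma alg_psf (e l0 om : R) (X : C) : 0 < e ->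
  @scal R_Ring C_R_ModuleSpace (/ e) (Cmult (RtoC ((om / e) ^ 2))
     (Cmult (@scal R_Ring C_R_ModuleSpace (sqrt e * l0 * (sqrt e * l0)) X)
            (@scal R_Ring C_R_ModuleSpace (sqrt e * l0 * (sqrt e * l0)) X)))
  = Cmult (RtoC (om ^ 2 * l0 ^ 4 / e)) (Cmult X X).
Proof.
  intros He. destruct X as [x1 x2].
  assert (Hs : sqrt e * sqrt e = e) by (apply sqrt_sqrt; lra).
  unfold scal; simpl. unfold C_R_ModuleSpace. simpl.
  unfold Cmult, RtoC. simpl.
  apply injective_projections; simpl; unfold scal; simpl; unfold mult; simpl.
  - replace (sqrt e * l0 * (sqrt e * l0)) with (e * l0 ^ 2)
      by (transitivity ((sqrt e * sqrt e) * l0 ^ 2); [rewrite Hs; ring | ring]). field. lra.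
  - replace (sqrt e * l0 * (sqrt e * l0)) with (e * l0 ^ 2)
      by (transitivity ((sqrt e * sqrt e) * l0 ^ 2); [rewrite Hs; ring | ring]). field. lra.
Qed.

Lemma JJ_cont2 c cs eta l0 zp1 zp2 zpar yp1 yp2 ypar w :
  0 < c -> 0 < cs -> 0 < zpar -> 0 < ypar ->
  cont2 (fun u1 u2 => hh c cs eta zp1 zp2 zpar yp1 yp2 ypar w (sqrt eta * l0 * u1) (sqrt eta * l0 * u2)).
Proof.
  intros. apply (cont2_scale (hh c cs eta zp1 zp2 zpar yp1 yp2 ypar w) (sqrt eta * l0)).
  apply (cont2_of3 (T:=R_UniformSpace) (hh c cs eta zp1 zp2 zpar yp1 yp2 ypar)).
  apply hh_cont3; auto.
Qed.

Lemma psf_form c cs l0 a b zp1 zp2 zpar yp1 yp2 ypar eta :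
  0 < c -> 0 < cs -> 0 < l0 -> 0 < a -> a < b -> 0 < zpar -> 0 < ypar -> 0 < eta ->
  psf c cs (sqrt eta * l0) (a / eta) (b / eta) (parax eta zp1 zp2 zpar) (parax eta yp1 yp2 ypar)
  = CInt (fun om => Cmult (RtoC (om ^ 2 * l0 ^ 4 / eta))
            (Cmult (JJ c cs eta l0 zp1 zp2 zpar yp1 yp2 ypar om) (JJ c cs eta l0 zp1 zp2 zpar yp1 yp2 ypar om))) a b.
Proof.
  intros Hc Hcs Hl0 Ha Hab Hz Hy He.
  assert (Hl : 0 < sqrt eta * l0) by (apply Rmult_lt_0_compat; [apply sqrt_lt_R0|]; lra).
  pose (H3 := hh c cs eta zp1 zp2 zpar yp1 yp2 ypar).
  pose (P := fun w => Cmult (RtoC (w ^ 2))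
                 (Cmult (Dbl (H3 w) (- (sqrt eta * l0)) (sqrt eta * l0))
                        (Dbl (H3 w) (- (sqrt eta * l0)) (sqrt eta * l0)))).
  change (psf c cs (sqrt eta * l0) (a / eta) (b / eta) (parax eta zp1 zp2 zpar) (parax eta yp1 yp2 ypar))
    with (CInt P (a / eta) (b / eta)).
  assert (H3c := hh_cont3 c cs eta zp1 zp2 zpar yp1 yp2 ypar Hc Hcs Hz Hy).
  assert (HP : forall w, continuous (U:=C_R_CompleteNormedModule) P w).
  { intros w. unfold P.
    apply (cC_mult (fun w => RtoC (w ^ 2))).
    { apply (cC_RtoC (fun w => w ^ 2)). apply (cR_pow (fun w => w)). apply continuous_id. }
    apply (cC_mult (fun w => Dbl (H3 w) _ _) (fun w => Dbl (H3 w) _ _));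
      apply (dbl_param (T:=R_UniformSpace) H3); try lra; exact H3c. }
  unfold CInt.
  transitivity (RInt (V:=C_R_CompleteNormedModule) P (/ eta * a + 0) (/ eta * b + 0)).
  { f_equal; field; lra. }
  etransitivity; [symmetry; apply (RInt_comp_lin (V:=C_R_CompleteNormedModule) P (/ eta) 0 a b) |].
  { apply ex_RInt_continuous. intros; apply HP. }
  apply (RInt_ext (V:=C_R_CompleteNormedModule)). intros om _.
  replace (/ eta * om + 0) with (om / eta) by (field; lra).
  unfold P.
  rewrite (dbl_scale (H3 (om / eta)) (sqrt eta * l0)); auto.
  2:{ apply (cont2_of3 (T:=R_UniformSpace) H3). exact H3c. }
  unfold JJ. unfold H3.
  generalize (Dbl (fun u1 u2 : R => hh c cs eta zp1 zp2 zpar yp1 yp2 ypar (om / eta) (sqrt eta * l0 * u1) (sqrt eta * l0 * u2)) (-1) 1).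
  intros X. apply alg_psf. exact He.
Qed.


Lemma alg_lead (pref K om s t1 t2 : R) (g : C) : pref = K * s ^ 2 ->
  Cmult (RtoC pref) (Cmult (RtoC (om ^ 2)) (Cmult (cexpi t1) (Cmult (cexpi t2) (Cmult g g))))
  = Cmult (RtoC (om ^ 2 * K)) (Cmult (Cmult (Cmult (RtoC s) (cexpi ((t1 + t2) / 2))) g)
                                     (Cmult (Cmult (RtoC s) (cexpi ((t1 + t2) / 2))) g)).
Proof.
  intros Hp.
  rewrite (Cmult_assoc (cexpi t1)). rewrite cexpi_add.
  replace (t1 + t2) with ((t1 + t2) / 2 + (t1 + t2) / 2) at 1 by field.
  rewrite <- cexpi_add.
  generalize (cexpi ((t1 + t2) / 2)). intros [e1 e2]. destruct g as [g1 g2]. subst pref.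
  unfold Cmult, RtoC. simpl. apply injective_projections; simpl; ring.
Qed.

Lemma ex_RInt_Cmult (f : R -> C) (be : C) a b :
  ex_RInt (V := C_R_CompleteNormedModule) f a b ->
  ex_RInt (V := C_R_CompleteNormedModule) (fun x => Cmult be (f x)) a b.
Proof.
  intros Hex. exists (Cmult be (CInt f a b)).
  rewrite <- CInt_Cmult by exact Hex.
  apply (RInt_correct (V:=C_R_CompleteNormedModule)).
  destruct Hex as [l Hl]. destruct be as [b1 b2]. destruct l as [l1 l2].
  apply is_RInt_C_fst in Hl as H1. apply is_RInt_C_snd in Hl as H2. simpl in H1, H2.
  eexists. apply is_RInt_C_pair; simpl.
  - apply (is_RInt_ext (fun t => minus (scal b1 (fst (f t))) (scal b2 (snd (f t))))).
    { intros. reflexivity. }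
    apply (is_RInt_minus (V:=R_NormedModule)); apply (is_RInt_scal (V:=R_NormedModule)); eauto.
  - apply (is_RInt_ext (fun t => plus (scal b1 (snd (f t))) (scal b2 (fst (f t))))).
    { intros. reflexivity. }
    apply (is_RInt_plus (V:=R_NormedModule)); apply (is_RInt_scal (V:=R_NormedModule)); eauto.
Qed.

Definition Eint (x11 x12 x2 u1 u2 : R) : C :=
  cexpi (- (u1 * x11 + u2 * x12) + (u1 ^ 2 + u2 ^ 2) / 2 * x2).

Lemma Eint_cont3 : forall z : (R * R * R) * R * R,
  continuous (U:=C_R_CompleteNormedModule)
    (fun z => (fun xi : R * R * R => Eint (fst (fst xi)) (snd (fst xi)) (snd xi)) (fst (fst z)) (snd (fst z)) (snd z)) z.
Proof. intros z. cbv [Eint]. repeat (cont_step; cbn beta). all: lra. Qed.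

Lemma calG_cont (p : R * R * R) :
  continuous (U:=C_R_CompleteNormedModule) (fun xi : R * R * R => calG (fst (fst xi)) (snd (fst xi)) (snd xi)) p.
Proof.
  apply (dbl_param (T := prod_UniformSpace (prod_UniformSpace R_UniformSpace R_UniformSpace) R_UniformSpace)
           (fun xi : R * R * R => Eint (fst (fst xi)) (snd (fst xi)) (snd xi)) (-1) 1 p).
  lra. exact Eint_cont3.
Qed.

Lemma cC_calG {T : UniformSpace} (f g h : T -> R) p :
  continuous f p -> continuous g p -> continuous h p ->
  continuous (U:=C_R_CompleteNormedModule) (fun x => calG (f x) (g x) (h x)) p.
Proof.
  intros Hf Hg Hh.
  apply (continuous_comp (fun x => ((f x, g x), h x))
           (fun xi : R * R * R => calG (fst (fst xi)) (snd (fst xi)) (snd xi))).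
  - apply cpair; [apply cpair|]; auto.
  - apply calG_cont.
Qed.

Definition leadG (pref : R) (t1 t2 x11 x12 x2 : R -> R) (a b : R) : C :=
  Cmult (RtoC pref) (CInt (fun w =>
     Cmult (RtoC (w ^ 2)) (Cmult (cexpi (t1 w)) (Cmult (cexpi (t2 w))
        (Cmult (calG (x11 w) (x12 w) (x2 w)) (calG (x11 w) (x12 w) (x2 w)))))) a b).

Definition JG (s : R) (Phi : R -> R -> R -> R) (om : R) : C :=
  Dbl (fun u1 u2 => Cmult (RtoC s) (cexpi (Phi om u1 u2))) (-1) 1.

Lemma lead_form (pref s eta l0 a b : R) (t1 t2 x11 x12 x2 : R -> R) (Phi : R -> R -> R -> R) :
  0 < eta -> a <= b ->
  (forall w, continuous t1 w) -> (forall w, continuous t2 w) -> (forall w, continuous x11 w) ->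
  (forall w, continuous x12 w) -> (forall w, continuous x2 w) ->
  pref = l0 ^ 4 / eta * s ^ 2 ->
  (forall om u1 u2, (t1 om + t2 om) / 2 + (- (u1 * x11 om + u2 * x12 om) + (u1 ^ 2 + u2 ^ 2) / 2 * x2 om)
                    = Phi om u1 u2) ->
  leadG pref t1 t2 x11 x12 x2 a b =
    CInt (fun om => Cmult (RtoC (om ^ 2 * l0 ^ 4 / eta)) (Cmult (JG s Phi om) (JG s Phi om))) a b /\
  ex_RInt (V := C_R_CompleteNormedModule)
    (fun om => Cmult (RtoC (om ^ 2 * l0 ^ 4 / eta)) (Cmult (JG s Phi om) (JG s Phi om))) a b.
Proof.
  intros He Hab C1 C2 C3 C4 C5 Hpref HPhi.
  set (L := fun w : R =>
     Cmult (RtoC (w ^ 2)) (Cmult (cexpi (t1 w)) (Cmult (cexpi (t2 w))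
        (Cmult (calG (x11 w) (x12 w) (x2 w)) (calG (x11 w) (x12 w) (x2 w)))))).
  assert (HL : ex_RInt (V := C_R_CompleteNormedModule) L a b).
  { apply ex_RInt_continuous. intros w _. unfold L.
    apply (cC_mult (fun w => RtoC (w ^ 2))).
    { apply (cC_RtoC (fun w => w ^ 2)). apply (cR_pow (fun w => w)). apply continuous_id. }
    apply (cC_mult (fun w => cexpi (t1 w))). apply cC_cexpi; auto.
    apply (cC_mult (fun w => cexpi (t2 w))). apply cC_cexpi; auto.
    apply (cC_mult (fun w => calG (x11 w) (x12 w) (x2 w)) (fun w => calG (x11 w) (x12 w) (x2 w)));
      apply cC_calG; auto. }
  assert (Hpt : forall om, Cmult (RtoC pref) (L om) =
            Cmult (RtoC (om ^ 2 * l0 ^ 4 / eta)) (Cmult (JG s Phi om) (JG s Phi om))).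
  { intros om.
    assert (HJ : JG s Phi om = Cmult (Cmult (RtoC s) (cexpi ((t1 om + t2 om) / 2))) (calG (x11 om) (x12 om) (x2 om))).
    { unfold JG. change (calG (x11 om) (x12 om) (x2 om)) with (Dbl (Eint (x11 om) (x12 om) (x2 om)) (-1) 1).
      rewrite (dbl_Cmult (Eint (x11 om) (x12 om) (x2 om))).
      - unfold Dbl, CInt. apply (RInt_ext (V:=C_R_CompleteNormedModule)). intros u1 _.
        apply (RInt_ext (V:=C_R_CompleteNormedModule)). intros u2 _.
        rewrite <- HPhi. rewrite <- cexpi_add. unfold Eint. rewrite Cmult_assoc. reflexivity.
      - lra.
      - intros z. apply (cont2_of3 (T:=prod_UniformSpace (prod_UniformSpace R_UniformSpace R_UniformSpace) R_UniformSpace)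
                   (fun xi : R * R * R => Eint (fst (fst xi)) (snd (fst xi)) (snd xi)) ((x11 om, x12 om), x2 om)).
        exact Eint_cont3. }
    rewrite HJ. unfold L.
    replace (om ^ 2 * l0 ^ 4 / eta) with (om ^ 2 * (l0 ^ 4 / eta)) by (field; lra).
    apply alg_lead. exact Hpref. }
  split.
  - unfold leadG. fold L. rewrite <- CInt_Cmult by exact HL.
    unfold CInt. apply (RInt_ext (V:=C_R_CompleteNormedModule)). intros; apply Hpt.
  - apply (ex_RInt_ext (fun om => Cmult (RtoC pref) (L om))). intros; apply Hpt.
    apply ex_RInt_Cmult. exact HL.
Qed.


Lemma JJ_cont c cs eta l0 zp1 zp2 zpar yp1 yp2 ypar om :
  0 < c -> 0 < cs -> 0 < zpar -> 0 < ypar -> 0 < eta ->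
  continuous (U:=C_R_CompleteNormedModule) (JJ c cs eta l0 zp1 zp2 zpar yp1 yp2 ypar) om.
Proof.
  intros Hc Hcs Hz Hy He. unfold JJ.
  apply (dbl_param (T:=R_UniformSpace)
    (fun om u1 u2 => hh c cs eta zp1 zp2 zpar yp1 yp2 ypar (om / eta) (sqrt eta * l0 * u1) (sqrt eta * l0 * u2))).
  lra. intros z.
  apply (continuous_comp (fun z : R * R * R => ((fst (fst z) / eta, sqrt eta * l0 * snd (fst z)), sqrt eta * l0 * snd z))
          (fun z => hh c cs eta zp1 zp2 zpar yp1 yp2 ypar (fst (fst z)) (snd (fst z)) (snd z))).
  - apply cpair; [apply cpair|]; repeat (cont_step; cbn beta). lra.
  - apply hh_cont3; auto.
Qed.

Ltac nz0 := repeat (apply Rmult_integral_contrapositive_currified); try lra.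

Lemma JGu_cont2 eta om c cs kz ky zp1 zp2 yp1 yp2 Nz Ny l0 s :
  0 < eta -> 0 < c -> 0 < cs -> 0 < kz -> 0 < ky -> 0 < Nz -> 0 < Ny ->
  cont2 (fun u1 u2 => Cmult (RtoC s) (cexpi (PhiT eta om c kz zp1 zp2 Nz l0 u1 u2 - PhiT eta om cs ky yp1 yp2 Ny l0 u1 u2))).
Proof.
  intros. intros z. cbv [PhiT]. repeat (cont_step; cbn beta).
  all: nz0.
Qed.

Lemma s_bound kz ky Nz Ny zpar ypar :
  0 < zpar -> 0 < ypar -> 0 < kz -> 0 < ky -> kz * zpar <= Nz -> ky * ypar <= Ny ->
  0 <= kz / Nz * (ky / Ny) / (16 * PI ^ 2) <= / zpar * / ypar / (16 * PI ^ 2).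
Proof.
  intros Hz Hy Hkz Hky HNz HNy.
  assert (HPI : 0 < 16 * PI ^ 2) by (pose proof PI_RGT_0; assert (0 < PI ^ 2) by (apply pow_lt; lra); lra).
  assert (0 < kz * zpar) by (apply Rmult_lt_0_compat; lra).
  assert (0 < ky * ypar) by (apply Rmult_lt_0_compat; lra).
  assert (A1 : 0 < kz / Nz <= / zpar).
  { split. apply Rdiv_lt_0_compat; lra.
    apply (Rmult_le_reg_r (Nz * zpar)). apply Rmult_lt_0_compat; lra.
    replace (kz / Nz * (Nz * zpar)) with (kz * zpar) by (field; lra).
    replace (/ zpar * (Nz * zpar)) with Nz by (field; lra). lra. }
  assert (A2 : 0 < ky / Ny <= / ypar).
  { split. apply Rdiv_lt_0_compat; lra.
    apply (Rmult_le_reg_r (Ny * ypar)). apply Rmult_lt_0_compat; lra.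
    replace (ky / Ny * (Ny * ypar)) with (ky * ypar) by (field; lra).
    replace (/ ypar * (Ny * ypar)) with Ny by (field; lra). lra. }
  split.
  - apply Rdiv_le_0_compat; [|lra]. apply Rmult_le_pos; lra.
  - unfold Rdiv. apply Rmult_le_compat_r. apply Rlt_le, Rinv_0_lt_compat; lra.
    apply Rmult_le_compat; lra.
Qed.

Lemma cont2_minus H1 H2 : cont2 H1 -> cont2 H2 -> cont2 (fun u1 u2 => Cminus (H1 u1 u2) (H2 u1 u2)).
Proof. intros A B z. apply (cC_minus (fun z => H1 (fst z) (snd z)) (fun z => H2 (fst z) (snd z))); auto. Qed.

Lemma final_gen c cs l0 a b zp1 zp2 zpar yp1 yp2 ypar kz ky eta Nz Ny CK :
  0 < c -> 0 < cs -> 0 < l0 -> 0 < a -> a < b -> 0 < zpar -> 0 < ypar -> 0 < kz -> 0 < ky ->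
  0 < eta <= 1 -> 0 < Nz -> 0 < Ny ->
  kz * zpar <= Nz -> ky * ypar <= Ny ->
  (forall om u1 u2, a <= om <= b -> Rabs u1 <= 1 -> Rabs u2 <= 1 ->
    Cmod (Cminus (hh c cs eta zp1 zp2 zpar yp1 yp2 ypar (om / eta) (sqrt eta * l0 * u1) (sqrt eta * l0 * u2))
                 (Cmult (RtoC (kz / Nz * (ky / Ny) / (16 * PI ^ 2)))
                        (cexpi (PhiT eta om c kz zp1 zp2 Nz l0 u1 u2 - PhiT eta om cs ky yp1 yp2 Ny l0 u1 u2))))
      <= eta * CK) ->
  let s := kz / Nz * (ky / Ny) / (16 * PI ^ 2) in
  let Phi := fun om u1 u2 => PhiT eta om c kz zp1 zp2 Nz l0 u1 u2 - PhiT eta om cs ky yp1 yp2 Ny l0 u1 u2 in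
  ex_RInt (V := C_R_CompleteNormedModule)
    (fun om => Cmult (RtoC (om ^ 2 * l0 ^ 4 / eta)) (Cmult (JG s Phi om) (JG s Phi om))) a b ->
  Cmod (Cminus
     (CInt (fun om => Cmult (RtoC (om ^ 2 * l0 ^ 4 / eta))
            (Cmult (JJ c cs eta l0 zp1 zp2 zpar yp1 yp2 ypar om) (JJ c cs eta l0 zp1 zp2 zpar yp1 yp2 ypar om))) a b)
     (CInt (fun om => Cmult (RtoC (om ^ 2 * l0 ^ 4 / eta)) (Cmult (JG s Phi om) (JG s Phi om))) a b))
  <= (b - a) * (b ^ 2 * l0 ^ 4 * (4 * Rabs CK) * (8 * (/ zpar * / ypar / (16 * PI ^ 2)) + 4 * Rabs CK)).
Proof.
  intros Hc Hcs Hl0 Ha Hab Hz Hy Hkz Hky He HNz HNy HNzq HNyq Hcore s Phi HexL.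
  set (Mk := / zpar * / ypar / (16 * PI ^ 2)).
  destruct (s_bound kz ky Nz Ny zpar ypar Hz Hy Hkz Hky HNzq HNyq) as [Hs0 Hs1]. fold s Mk in Hs0, Hs1.
  set (Fi := fun om => Cmult (RtoC (om ^ 2 * l0 ^ 4 / eta))
            (Cmult (JJ c cs eta l0 zp1 zp2 zpar yp1 yp2 ypar om) (JJ c cs eta l0 zp1 zp2 zpar yp1 yp2 ypar om))).
  set (Li := fun om => Cmult (RtoC (om ^ 2 * l0 ^ 4 / eta)) (Cmult (JG s Phi om) (JG s Phi om))) in *.
  assert (HexF : ex_RInt (V := C_R_CompleteNormedModule) Fi a b).
  { apply ex_RInt_continuous. intros w _. unfold Fi.
    apply (cC_mult (fun w => RtoC (w ^ 2 * l0 ^ 4 / eta))).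
    { apply (cC_RtoC (fun w => w ^ 2 * l0 ^ 4 / eta)). repeat (cont_step; cbn beta). lra. }
    apply (cC_mult (JJ c cs eta l0 zp1 zp2 zpar yp1 yp2 ypar) (JJ c cs eta l0 zp1 zp2 zpar yp1 yp2 ypar));
      apply JJ_cont; lra. }
  change (Cmod (Cminus (CInt Fi a b) (CInt Li a b)) <= (b - a) * (b ^ 2 * l0 ^ 4 * (4 * Rabs CK) * (8 * Mk + 4 * Rabs CK))).
  replace (Cminus (CInt Fi a b) (CInt Li a b)) with (CInt (fun om => Cminus (Fi om) (Li om)) a b).
  2:{ unfold CInt. apply (RInt_minus (V:=C_R_CompleteNormedModule)); auto. }
  apply CInt_bound. lra.
  { apply (ex_RInt_minus (V:=C_R_CompleteNormedModule)); auto. }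
  intros om Hom.
  assert (Hcoef : 0 <= om ^ 2 * l0 ^ 4 / eta).
  { apply Rdiv_le_0_compat; [|lra]. apply Rmult_le_pos; apply pow_le; lra. }
  set (JF := JJ c cs eta l0 zp1 zp2 zpar yp1 yp2 ypar om).
  set (JL := JG s Phi om).
  assert (E1 : Cminus (Fi om) (Li om) = Cmult (RtoC (om ^ 2 * l0 ^ 4 / eta)) (Cminus (Cmult JF JF) (Cmult JL JL))).
  { unfold Fi, Li. fold JF JL. generalize (Cmult JF JF) (Cmult JL JL). intros X Y.
    destruct X, Y. unfold Cminus, Cmult, Cplus, Copp, RtoC. simpl. apply injective_projections; simpl; ring. }
  rewrite E1, Cmod_mult, Cmod_R, Rabs_right by lra.
  set (K := fun u1 u2 => hh c cs eta zp1 zp2 zpar yp1 yp2 ypar (om / eta) (sqrt eta * l0 * u1) (sqrt eta * l0 * u2)).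
  set (K' := fun u1 u2 => Cmult (RtoC s) (cexpi (Phi om u1 u2))).
  assert (CK2 : cont2 K) by (apply JJ_cont2; lra).
  assert (CK2' : cont2 K') by (unfold K', Phi; cbn beta; apply JGu_cont2; lra).
  assert (HKK : forall u1 u2, -1 <= u1 <= 1 -> -1 <= u2 <= 1 -> Cmod (Cminus (K u1 u2) (K' u1 u2)) <= eta * Rabs CK).
  { intros u1 u2 Hu1 Hu2. unfold K, K', Phi, s. cbn beta.
    eapply Rle_trans. apply Hcore; auto. apply Rabs_le; lra. apply Rabs_le; lra.
    apply Rmult_le_compat_l. lra. apply Rle_abs. }
  assert (HK' : forall u1 u2, Cmod (K' u1 u2) <= Mk).
  { intros. unfold K'. rewrite Cmod_RtoC_cexpi. rewrite Rabs_right; lra. }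
  assert (D1 : Cmod (Cminus JF JL) <= 4 * (eta * Rabs CK)).
  { unfold JF, JL, JJ, JG. fold K. change (Dbl (fun u1 u2 => Cmult (RtoC s) (cexpi (Phi om u1 u2))) (-1) 1) with (Dbl K' (-1) 1).
    rewrite dbl_minus; auto; try lra.
    replace (4 * (eta * Rabs CK)) with ((1 - -1) * ((1 - -1) * (eta * Rabs CK))) by ring.
    apply dbl_bound. lra. apply cont2_minus; auto. intros; apply HKK; auto. }
  assert (D2 : Cmod JL <= 4 * Mk).
  { unfold JL, JG. change (Dbl (fun u1 u2 => Cmult (RtoC s) (cexpi (Phi om u1 u2))) (-1) 1) with (Dbl K' (-1) 1).
    replace (4 * Mk) with ((1 - -1) * ((1 - -1) * Mk)) by ring.
    apply dbl_bound. lra. auto. intros; apply HK'. }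
  assert (D3 : Cmod JF <= 4 * (Mk + Rabs CK)).
  { unfold JF, JJ. fold K.
    replace (4 * (Mk + Rabs CK)) with ((1 - -1) * ((1 - -1) * (Mk + Rabs CK))) by ring.
    apply dbl_bound. lra. auto. intros u1 u2 Hu1 Hu2.
    replace (K u1 u2) with (Cplus (K' u1 u2) (Cminus (K u1 u2) (K' u1 u2))).
    2:{ generalize (K u1 u2) (K' u1 u2). intros [x1 x2] [y1 y2]. unfold Cplus, Cminus, Copp. simpl.
        apply injective_projections; simpl; ring. }
    eapply Rle_trans. apply Cmod_triangle.
    apply Rplus_le_compat. apply HK'.
    eapply Rle_trans. apply HKK; auto.
    rewrite <- (Rmult_1_l (Rabs CK)) at 2. apply Rmult_le_compat_r. apply Rabs_pos. lra. }
  eapply Rle_trans. apply Rmult_le_compat_l. exact Hcoef. apply Csq_diff.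
  assert (HCK : 0 <= Rabs CK) by apply Rabs_pos.
  assert (HMk : 0 <= Mk) by lra.
  apply Rle_trans with (om ^ 2 * l0 ^ 4 / eta * (4 * (eta * Rabs CK) * (4 * (Mk + Rabs CK) + 4 * Mk))).
  { apply Rmult_le_compat_l. exact Hcoef.
    apply Rmult_le_compat. apply Cmod_ge_0.
    pose proof (Cmod_ge_0 JF). pose proof (Cmod_ge_0 JL). lra. exact D1. lra. }
  replace (om ^ 2 * l0 ^ 4 / eta * (4 * (eta * Rabs CK) * (4 * (Mk + Rabs CK) + 4 * Mk)))
    with (om ^ 2 * l0 ^ 4 * (4 * Rabs CK) * (8 * Mk + 4 * Rabs CK)) by (field; lra).
  apply Rmult_le_compat_r. lra.
  apply Rmult_le_compat_r. lra.
  apply Rmult_le_compat_r. apply pow_le; lra.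
  apply pow_incr. lra.
Qed.


Lemma norm3_parax eta p1 p2 q : 0 < eta ->
  0 <= norm3 (parax eta p1 p2 q) /\ norm3 (parax eta p1 p2 q) ^ 2 = q ^ 2 + eta * (p1 ^ 2 + p2 ^ 2).
Proof.
  intros He. unfold norm3, parax, mkpt.
  assert (Hs : sqrt eta ^ 2 = eta) by (apply pow2_sqrt; lra).
  split. apply sqrt_pos.
  rewrite pow2_sqrt.
  - replace ((sqrt eta * p1) ^ 2) with (sqrt eta ^ 2 * p1 ^ 2) by ring.
    replace ((sqrt eta * p2) ^ 2) with (sqrt eta ^ 2 * p2 ^ 2) by ring. rewrite Hs. ring.
  - repeat apply Rplus_le_le_0_compat; apply pow2_ge_0.
Qed.

Lemma normk eta k p1 p2 q N : 0 < eta -> 0 < k -> 0 < q ->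
  N = norm3 (parax eta (k ^ 2 * p1) (k ^ 2 * p2) (k * q)) ->
  0 < N /\ N ^ 2 = k ^ 2 * (q ^ 2 + eta * (k ^ 2 * (p1 ^ 2 + p2 ^ 2))) /\ k * q <= N.
Proof.
  intros He Hk Hq HN. destruct (norm3_parax eta (k ^ 2 * p1) (k ^ 2 * p2) (k * q) He) as [H0 H2].
  rewrite <- HN in H0, H2.
  assert (E : N ^ 2 = k ^ 2 * (q ^ 2 + eta * (k ^ 2 * (p1 ^ 2 + p2 ^ 2)))) by (rewrite H2; ring).
  assert (kq : 0 < k * q) by (apply Rmult_lt_0_compat; lra).
  assert (L : k * q <= N).
  { apply sq_ge; auto. rewrite H2.
    assert (0 <= eta * ((k ^ 2 * p1) ^ 2 + (k ^ 2 * p2) ^ 2)).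
    { apply Rmult_le_pos. lra. apply Rplus_le_le_0_compat; apply pow2_ge_0. }
    lra. }
  split; [lra | split; auto].
Qed.

Definition Bnd (a b l0 zpar ypar CK : R) :=
  (b - a) * (b ^ 2 * l0 ^ 4 * (4 * Rabs CK) * (8 * (/ zpar * / ypar / (16 * PI ^ 2)) + 4 * Rabs CK)).

Definition CoreProp (c cs l0 a b zp1 zp2 zpar yp1 yp2 ypar kz ky CK : R) :=
  forall eta om u1 u2 Nz Ny,
    0 < eta <= 1 -> a <= om <= b -> Rabs u1 <= 1 -> Rabs u2 <= 1 ->
    0 <= Nz -> Nz ^ 2 = kz ^ 2 * (zpar ^ 2 + eta * (kz ^ 2 * (zp1 ^ 2 + zp2 ^ 2))) ->
    0 <= Ny -> Ny ^ 2 = ky ^ 2 * (ypar ^ 2 + eta * (ky ^ 2 * (yp1 ^ 2 + yp2 ^ 2))) ->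
    Cmod (Cminus (hh c cs eta zp1 zp2 zpar yp1 yp2 ypar (om / eta) (sqrt eta * l0 * u1) (sqrt eta * l0 * u2))
                 (Cmult (RtoC (kz / Nz * (ky / Ny) / (16 * PI ^ 2)))
                        (cexpi (PhiT eta om c kz zp1 zp2 Nz l0 u1 u2 - PhiT eta om cs ky yp1 yp2 Ny l0 u1 u2))))
      <= eta * CK.

Lemma bound1 c cs l0 a b zp1 zp2 zpar yp1 yp2 ypar CK eta :
  0 < c -> 0 < cs -> 0 < l0 -> 0 < a -> a < b -> 0 < zpar -> 0 < ypar -> 0 < eta <= 1 ->
  CoreProp c cs l0 a b zp1 zp2 zpar yp1 yp2 ypar 1 (c / cs) CK ->
  Cmod (Cminus (psf c cs (sqrt eta * l0) (a / eta) (b / eta) (parax eta zp1 zp2 zpar) (parax eta yp1 yp2 ypar))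
               (lead1 eta c cs l0 a b zp1 zp2 zpar yp1 yp2 ypar)) <= Bnd a b l0 zpar ypar CK.
Proof.
  intros Hc Hcs Hl0 Ha Hab Hz Hy He Hcore.
  assert (Hk : 0 < c / cs) by (apply Rdiv_lt_0_compat; lra).
  set (nz := norm3 (parax eta zp1 zp2 zpar)).
  set (nph := norm3 (phi_c eta c cs yp1 yp2 ypar)).
  destruct (normk eta 1 zp1 zp2 zpar nz (proj1 He) Rlt_0_1 Hz) as [Nz0 [Nz2 Nzq]].
  { unfold nz. repeat f_equal; ring. }
  destruct (normk eta (c / cs) yp1 yp2 ypar nph (proj1 He) Hk Hy) as [Ny0 [Ny2 Nyq]].
  { reflexivity. }
  rewrite psf_form by (auto; lra).
  pose proof PI_RGT_0 as HPI.
  set (s := 1 / nz * (c / cs / nph) / (16 * PI ^ 2)).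
  set (Phi := fun om u1 u2 => PhiT eta om c 1 zp1 zp2 nz l0 u1 u2 - PhiT eta om cs (c / cs) yp1 yp2 nph l0 u1 u2).
  assert (L1 : lead1 eta c cs l0 a b zp1 zp2 zpar yp1 yp2 ypar =
    leadG (/ eta * (c / cs) ^ 2 * l0 ^ 4 / (16 * PI ^ 2 * nz * nph) ^ 2)
      (fun w => 2 * w / (eta * c) * (nz - nph))
      (fun w => w / c * (1 - (cs / c) ^ 2) * (((c / cs) ^ 2 * yp1) ^ 2 + ((c / cs) ^ 2 * yp2) ^ 2) / nph)
      (fun w => w * l0 / c * (zp1 / nz - (c / cs) ^ 2 * yp1 / nph))
      (fun w => w * l0 / c * (zp2 / nz - (c / cs) ^ 2 * yp2 / nph))
      (fun w => w * l0 ^ 2 / c * (/ nz - (c / cs) ^ 2 * / nph)) a b) by reflexivity.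
  rewrite L1.
  destruct (lead_form (/ eta * (c / cs) ^ 2 * l0 ^ 4 / (16 * PI ^ 2 * nz * nph) ^ 2) s eta l0 a b
      (fun w => 2 * w / (eta * c) * (nz - nph))
      (fun w => w / c * (1 - (cs / c) ^ 2) * (((c / cs) ^ 2 * yp1) ^ 2 + ((c / cs) ^ 2 * yp2) ^ 2) / nph)
      (fun w => w * l0 / c * (zp1 / nz - (c / cs) ^ 2 * yp1 / nph))
      (fun w => w * l0 / c * (zp2 / nz - (c / cs) ^ 2 * yp2 / nph))
      (fun w => w * l0 ^ 2 / c * (/ nz - (c / cs) ^ 2 * / nph)) Phi) as [E Hex].
  - lra.
  - lra.
  - intros w. repeat (cont_step; cbn beta). all: nz0.
  - intros w. repeat (cont_step; cbn beta). all: nz0.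
  - intros w. repeat (cont_step; cbn beta). all: nz0.
  - intros w. repeat (cont_step; cbn beta). all: nz0.
  - intros w. repeat (cont_step; cbn beta). all: nz0.
  - unfold s. field. repeat split; lra.
  - intros om u1 u2. unfold Phi, PhiT. field. repeat split; lra.
  - rewrite E.
    apply (final_gen c cs l0 a b zp1 zp2 zpar yp1 yp2 ypar 1 (c / cs) eta nz nph CK); auto; try lra.
    intros om u1 u2 Hom Hu1 Hu2. apply Hcore; auto; lra.
Qed.

Lemma bound2 c cs l0 a b zp1 zp2 zpar yp1 yp2 ypar CK eta :
  0 < c -> 0 < cs -> 0 < l0 -> 0 < a -> a < b -> 0 < zpar -> 0 < ypar -> 0 < eta <= 1 ->
  CoreProp c cs l0 a b zp1 zp2 zpar yp1 yp2 ypar (cs / c) 1 CK ->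
  Cmod (Cminus (psf c cs (sqrt eta * l0) (a / eta) (b / eta) (parax eta zp1 zp2 zpar) (parax eta yp1 yp2 ypar))
               (lead2 eta c cs l0 a b zp1 zp2 zpar yp1 yp2 ypar)) <= Bnd a b l0 zpar ypar CK.
Proof.
  intros Hc Hcs Hl0 Ha Hab Hz Hy He Hcore.
  assert (Hk : 0 < cs / c) by (apply Rdiv_lt_0_compat; lra).
  set (ny := norm3 (parax eta yp1 yp2 ypar)).
  set (nps := norm3 (phi_c_inv eta c cs zp1 zp2 zpar)).
  destruct (normk eta 1 yp1 yp2 ypar ny (proj1 He) Rlt_0_1 Hy) as [Ny0 [Ny2 Nyq]].
  { unfold ny. repeat f_equal; ring. }
  destruct (normk eta (cs / c) zp1 zp2 zpar nps (proj1 He) Hk Hz) as [Nz0 [Nz2 Nzq]].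
  { reflexivity. }
  rewrite psf_form by (auto; lra).
  pose proof PI_RGT_0 as HPI.
  set (s := cs / c / nps * (1 / ny) / (16 * PI ^ 2)).
  set (Phi := fun om u1 u2 => PhiT eta om c (cs / c) zp1 zp2 nps l0 u1 u2 - PhiT eta om cs 1 yp1 yp2 ny l0 u1 u2).
  assert (L1 : lead2 eta c cs l0 a b zp1 zp2 zpar yp1 yp2 ypar =
    leadG (/ eta * (cs / c) ^ 2 * l0 ^ 4 / (16 * PI ^ 2 * ny * nps) ^ 2)
      (fun w => 2 * w / (eta * cs) * (nps - ny))
      (fun w => w / cs * ((c / cs) ^ 2 - 1) * (((cs / c) ^ 2 * zp1) ^ 2 + ((cs / c) ^ 2 * zp2) ^ 2) / nps)
      (fun w => w * l0 / cs * ((cs / c) ^ 2 * zp1 / nps - yp1 / ny))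
      (fun w => w * l0 / cs * ((cs / c) ^ 2 * zp2 / nps - yp2 / ny))
      (fun w => w * l0 ^ 2 / cs * ((cs / c) ^ 2 * / nps - / ny)) a b) by reflexivity.
  rewrite L1.
  destruct (lead_form (/ eta * (cs / c) ^ 2 * l0 ^ 4 / (16 * PI ^ 2 * ny * nps) ^ 2) s eta l0 a b
      (fun w => 2 * w / (eta * cs) * (nps - ny))
      (fun w => w / cs * ((c / cs) ^ 2 - 1) * (((cs / c) ^ 2 * zp1) ^ 2 + ((cs / c) ^ 2 * zp2) ^ 2) / nps)
      (fun w => w * l0 / cs * ((cs / c) ^ 2 * zp1 / nps - yp1 / ny))
      (fun w => w * l0 / cs * ((cs / c) ^ 2 * zp2 / nps - yp2 / ny))
      (fun w => w * l0 ^ 2 / cs * ((cs / c) ^ 2 * / nps - / ny)) Phi) as [E Hex].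
  - lra.
  - lra.
  - intros w. repeat (cont_step; cbn beta). all: nz0.
  - intros w. repeat (cont_step; cbn beta). all: nz0.
  - intros w. repeat (cont_step; cbn beta). all: nz0.
  - intros w. repeat (cont_step; cbn beta). all: nz0.
  - intros w. repeat (cont_step; cbn beta). all: nz0.
  - unfold s. field. repeat split; lra.
  - intros om u1 u2. unfold Phi, PhiT. field. repeat split; lra.
  - rewrite E.
    apply (final_gen c cs l0 a b zp1 zp2 zpar yp1 yp2 ypar (cs / c) 1 eta nps ny CK); auto; try lra.
    intros om u1 u2 Hom Hu1 Hu2. apply Hcore; auto; lra.
Qed.

Theorem mainTheorem1 (c cs l0 a b zp1 zp2 zpar yp1 yp2 ypar : R) :
  0 < c -> 0 < cs -> 0 < l0 -> 0 < a -> a < b -> 0 < zpar -> 0 < ypar ->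
  exists C0 : R, exists eta0 : R, 0 < eta0 /\
    forall eta : R, 0 < eta < eta0 ->
      let F := psf c cs (sqrt eta * l0) (a / eta) (b / eta)
                   (parax eta zp1 zp2 zpar) (parax eta yp1 yp2 ypar) in
      Cmod (Cminus F (lead1 eta c cs l0 a b zp1 zp2 zpar yp1 yp2 ypar)) <= C0 /\
      Cmod (Cminus F (lead2 eta c cs l0 a b zp1 zp2 zpar yp1 yp2 ypar)) <= C0.
Proof.
  intros Hc Hcs Hl0 Ha Hab Hz Hy.
  destruct (core c cs l0 a b zp1 zp2 zpar yp1 yp2 ypar 1 (c / cs) Hc Hcs Hl0 Ha Hab Hz Hy Rlt_0_1
             (Rdiv_lt_0_compat _ _ Hc Hcs)) as [CK1 H1].
  destruct (core c cs l0 a b zp1 zp2 zpar yp1 yp2 ypar (cs / c) 1 Hc Hcs Hl0 Ha Hab Hz Hy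
             (Rdiv_lt_0_compat _ _ Hcs Hc) Rlt_0_1) as [CK2 H2].
  assert (B0 : forall CK, 0 <= Bnd a b l0 zpar ypar CK).
  { intros CK. unfold Bnd. pose proof PI_RGT_0.
    assert (0 < 16 * PI ^ 2) by (assert (0 < PI ^ 2) by (apply pow_lt; lra); lra).
    assert (0 <= / zpar * / ypar / (16 * PI ^ 2)).
    { apply Rdiv_le_0_compat; [|lra]. apply Rmult_le_pos; apply Rlt_le, Rinv_0_lt_compat; lra. }
    pose proof (Rabs_pos CK).
    apply Rmult_le_pos. lra. apply Rmult_le_pos. apply Rmult_le_pos. apply Rmult_le_pos.
    apply pow_le; lra. apply pow_le; lra. lra. lra. }
  exists (Bnd a b l0 zpar ypar CK1 + Bnd a b l0 zpar ypar CK2), 1.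
  split; [lra|].
  intros eta He. cbv zeta. split.
  - apply Rle_trans with (Bnd a b l0 zpar ypar CK1).
    + apply bound1; try lra. exact H1.
    + pose proof (B0 CK2). lra.
  - apply Rle_trans with (Bnd a b l0 zpar ypar CK2).
    + apply bound2; try lra. exact H2.
    + pose proof (B0 CK1). lra.
Qed.
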